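(* Let $f:\Sigma\to\mathbb{S}^4_1$ be a non-isotropic conformal marginally trapped immersion with flat normal bundle, and, on a simply connected coordinate domain, let $z$, $c$, $\xi$, $h$, $u$ and the matrices $A^t$ be as in the context. Then for every $t\in\mathbb R$ the one-form $\alpha_t=A^t\,dz+\overline{A^t}\,d\bar z$ is $\mathfrak{so}(4,1)$-valued, coincides for $t=0$ with the Maurer–Cartan form $F^{-1}dF$ of the adapted frame $F$, and satisfies the Maurer–Cartan equation $d\alpha_t+\frac12[\alpha_t\wedge\alpha_t]=0$.
   Context: $\mathbb{R}^5_1$ is $\mathbb{R}^5$ with $\langle x,y\rangle=x_0y_0+x_1y_1+x_2y_2+x_3y_3-x_4y_4$ (complex-bilinearly extended), standard basis $e_0,\dots,e_4$, $\mathbb{S}^4_1=\{\langle x,x\rangle=1\}$; future pointing: $\langle X,e_4\rangle<0$. $f$ conformal spacelike immersion, $\langle f_z,f_{\bar z}\rangle=e^{2u}$; positively oriented orthonormal normal frame $\{N_1,N_2\}$ ($\langle N_1,N_1\rangle=1,\langle N_2,N_2\rangle=-1,\langle N_1,N_2\rangle=0$, $N_2$ future pointing, orientation of $\nu(f)$); $\xi_1=\langle f_{zz},N_1\rangle$, $\xi_2=-\langle f_{zz},N_2\rangle$; $\mathbf H$: $f_{z\bar z}=-e^{2u}f+e^{2u}\mathbf H$; marginally trapped: $\langle\mathbf H,\mathbf H\rangle=0$, $\mathbf H=h(N_1+N_2)$; non-isotropic: $\xi_1^2-\xi_2^2\ne0$. Setup: since the normal bundle is flat, choose $\{N_1,N_2\}$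 $\nabla^\perp$-parallel (i.e. $\langle\partial_zN_1,N_2\rangle=0$) and a coordinate $z$ with $q=(\xi_1-\xi_2)dz^2=c\,dz^2$, $c\in\mathbb R\setminus\{0\}$; write $\xi_2=\xi$, $\xi_1=\xi+c$. Let $F=(f,F_1,F_2,N_1,N_2)\in SO_+(4,1)$ (columns) with $f_z=\frac{e^u}{\sqrt2}(F_1-iF_2)$. For $t\in\mathbb R$ put $h^t=h+\frac{t}{2c}$, $a^t_1=\frac{e^{-u}(\xi+c)+e^uh^t}{\sqrt2}$, $b^t_1=\frac{e^{-u}(\xi+c)-e^uh^t}{\sqrt2}$, $a^t_2=\frac{e^{-u}\xi+e^uh^t}{\sqrt2}$, $b^t_2=\frac{e^{-u}\xi-e^uh^t}{\sqrt2}$, and let $A^t$ be the $5\times5$ matrix with rows $(0,\,-\tfrac{e^u}{\sqrt2},\,i\tfrac{e^u}{\sqrt2},\,0,\,0)$, $(\tfrac{e^u}{\sqrt2},\,0,\,iu_z,\,-a^t_1,\,a^t_2)$, $(-i\tfrac{e^u}{\sqrt2},\,-iu_z,\,0,\,-ib^t_1,\,ib^t_2)$, $(0,\,a^t_1,\,ib^t_1,\,0,\,0)$, $(0,\,a^t_2,\,ib^t_2,\,0,\,0)$. Then $A^0=F^{-1}F_z$. *)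

(* Defs.v *)
From Stdlib Require Import Reals Lra Lia.
Open Scope R_scope.

Record Cx := mkC { cre : R; cim : R }.
Definition RtoC (r : R) : Cx := mkC r 0.
Definition C0 : Cx := mkC 0 0.
Definition Ci : Cx := mkC 0 1.
Definition Cadd (a b : Cx) : Cx := mkC (cre a + cre b) (cim a + cim b).
Definition Copp (a : Cx) : Cx := mkC (- cre a) (- cim a).
Definition Csub (a b : Cx) : Cx := Cadd a (Copp b).
Definition Cmul (a b : Cx) : Cx :=
  mkC (cre a * cre b - cim a * cim b) (cre a * cim b + cim a * cre b).
Definition Cconj (a : Cx) : Cx := mkC (cre a) (- cim a).
Definition Cscal (r : R) (a : Cx) : Cx := mkC (r * cre a) (r * cim a).

(* vectors in R^5 (resp. C^5) are functions on indices 0..4 *)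
Definition VR := nat -> R.
Definition VC := nat -> Cx.
Definition sum5 (g : nat -> R) : R := g 0%nat + g 1%nat + g 2%nat + g 3%nat + g 4%nat.
Definition Csum5 (g : nat -> Cx) : Cx :=
  Cadd (g 0%nat) (Cadd (g 1%nat) (Cadd (g 2%nat) (Cadd (g 3%nat) (g 4%nat)))).
(* signature: eta i = 1 for i = 0..3, eta 4 = -1 ; J = diag(eta) *)
Definition eta (i : nat) : R := if Nat.eqb i 4 then -1 else 1.
Definition inner5 (a b : VR) : R := sum5 (fun i => eta i * a i * b i).
Definition cinner (a b : VC) : Cx := Csum5 (fun i => Cscal (eta i) (Cmul (a i) (b i))).
Definition VtoC (a : VR) : VC := fun i => RtoC (a i).
Definition Vconj (a : VC) : VC := fun i => Cconj (a i).

Fixpoint detn (n : nat) (M : nat -> nat -> R) : R :=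
  match n with
  | O => 1
  | S m => sum_f_R0 (fun j => (-1) ^ j * M O j *
             detn m (fun a b => M (S a) (if Nat.ltb b j then b else S b))) m
  end.

(* SO_+(4,1): F^T J F = J, det F = 1, time-orientation preserving (F_44 > 0) *)
Definition SOp41 (F : nat -> nat -> R) : Prop :=
  (forall i j, (i < 5)%nat -> (j < 5)%nat ->
     sum5 (fun k => eta k * F k i * F k j) = (if Nat.eqb i j then eta i else 0))
  /\ detn 5 F = 1 /\ F 4%nat 4%nat > 0.

Definition is_so41 (X : nat -> nat -> R) : Prop :=
  forall i j, (i < 5)%nat -> (j < 5)%nat -> eta i * X i j + eta j * X j i = 0.

Definition Dx (g : R -> R -> R) (x y l : R) : Prop := derivable_pt_lim (fun s => g s y) x l.
Definition Dy (g : R -> R -> R) (x y l : R) : Prop := derivable_pt_lim (fun s => g x s) y l.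

(* d/dz = (d/dx - i d/dy)/2 ,  d/dzbar = (d/dx + i d/dy)/2 *)
Definition HasDz (g : R -> R -> Cx) (x y : R) (w : Cx) : Prop :=
  exists ax ay bx bY,
    Dx (fun a b => cre (g a b)) x y ax /\ Dy (fun a b => cre (g a b)) x y ay /\
    Dx (fun a b => cim (g a b)) x y bx /\ Dy (fun a b => cim (g a b)) x y bY /\
    w = mkC ((ax + bY) / 2) ((bx - ay) / 2).
Definition HasDzb (g : R -> R -> Cx) (x y : R) (w : Cx) : Prop :=
  exists ax ay bx bY,
    Dx (fun a b => cre (g a b)) x y ax /\ Dy (fun a b => cre (g a b)) x y ay /\
    Dx (fun a b => cim (g a b)) x y bx /\ Dy (fun a b => cim (g a b)) x y bY /\
    w = mkC ((ax - bY) / 2) ((bx + ay) / 2).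

Definition HasDzV (g : R -> R -> VR) (x y : R) (w : VC) : Prop :=
  forall i, (i < 5)%nat -> HasDz (fun a b => RtoC (g a b i)) x y (w i).
Definition HasDzCV (g : R -> R -> VC) (x y : R) (w : VC) : Prop :=
  forall i, (i < 5)%nat -> HasDz (fun a b => g a b i) x y (w i).
Definition HasDzbCV (g : R -> R -> VC) (x y : R) (w : VC) : Prop :=
  forall i, (i < 5)%nat -> HasDzb (fun a b => g a b i) x y (w i).

Definition openU (U : R -> R -> Prop) : Prop :=
  forall x y, U x y -> exists r, r > 0 /\
    forall x' y', Rabs (x' - x) < r -> Rabs (y' - y) < r -> U x' y'.

Definition cont2 (U : R -> R -> Prop) (g : R -> R -> R) : Prop :=
  forall x y, U x y -> forall eps, eps > 0 -> exists d, d > 0 /\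
    forall x' y', Rabs (x' - x) < d -> Rabs (y' - y) < d -> Rabs (g x' y' - g x y) < eps.

Fixpoint Ck (k : nat) (U : R -> R -> Prop) (g : R -> R -> R) : Prop :=
  match k with
  | O => cont2 U g
  | S k' => cont2 U g /\ exists gx gy : R -> R -> R,
      (forall x y, U x y -> Dx g x y (gx x y) /\ Dy g x y (gy x y)) /\
      Ck k' U gx /\ Ck k' U gy
  end.
Definition smooth (U : R -> R -> Prop) (g : R -> R -> R) : Prop := forall k, Ck k U g.

Definition Fmat (f F1 F2 N1 N2 : R -> R -> VR) (x y : R) : nat -> nat -> R :=
  fun i j => match j with
             | O => f x y i
             | S O => F1 x y i
             | S (S O) => F2 x y i
             | S (S (S O)) => N1 x y i
             | _ => N2 x y i
             end.

Definition Amat (t c u h : R) (uz xi : Cx) : nat -> nat -> Cx :=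
  let e := exp u / sqrt 2 in
  let ht := h + t / (2 * c) in
  let a1 := Cscal (/ sqrt 2) (Cadd (Cscal (exp (- u)) (Cadd xi (RtoC c))) (RtoC (exp u * ht))) in
  let b1 := Cscal (/ sqrt 2) (Csub (Cscal (exp (- u)) (Cadd xi (RtoC c))) (RtoC (exp u * ht))) in
  let a2 := Cscal (/ sqrt 2) (Cadd (Cscal (exp (- u)) xi) (RtoC (exp u * ht))) in
  let b2 := Cscal (/ sqrt 2) (Csub (Cscal (exp (- u)) xi) (RtoC (exp u * ht))) in
  fun i j =>
    match i, j with
    | O, S O => RtoC (- e)
    | O, S (S O) => Cmul Ci (RtoC e)
    | S O, O => RtoC e
    | S O, S (S O) => Cmul Ci uz
    | S O, S (S (S O)) => Copp a1
    | S O, S (S (S (S O))) => a2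
    | S (S O), O => Copp (Cmul Ci (RtoC e))
    | S (S O), S O => Copp (Cmul Ci uz)
    | S (S O), S (S (S O)) => Copp (Cmul Ci b1)
    | S (S O), S (S (S (S O))) => Cmul Ci b2
    | S (S (S O)), S O => a1
    | S (S (S O)), S (S O) => Cmul Ci b1
    | S (S (S (S O))), S O => a2
    | S (S (S (S O))), S (S O) => Cmul Ci b2
    | _, _ => C0
    end.

Definition Afield (t c : R) (u h : R -> R -> R) (uz xi : R -> R -> Cx)
  : R -> R -> nat -> nat -> Cx :=
  fun x y => Amat t c (u x y) (h x y) (uz x y) (xi x y).

(* alpha(d/dx) = A + conj A = 2 Re A ; alpha(d/dy) = i A - i conj A = -2 Im A *)
Definition alpha_x (A : nat -> nat -> Cx) : nat -> nat -> R := fun i j => 2 * cre (A i j).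
Definition alpha_y (A : nat -> nat -> Cx) : nat -> nat -> R := fun i j => - (2 * cim (A i j)).

Definition commAAbar (A : nat -> nat -> Cx) (i j : nat) : Cx :=
  Csum5 (fun k => Csub (Cmul (A i k) (Cconj (A k j))) (Cmul (Cconj (A i k)) (A k j))).

(* Main.v *)
Require Import Defs.
From Stdlib Require Import Reals.
Open Scope R_scope.
From Stdlib Require Import Lra Lia.
Import Defs.

Lemma dpl_const (k x : R) : derivable_pt_lim (fun _ => k) x 0.
Proof. apply derivable_pt_lim_const. Qed.
Lemma dpl_id (x : R) : derivable_pt_lim (fun s => s) x 1.
Proof. apply derivable_pt_lim_id. Qed.
Lemma dpl_plus f g x lf lg : derivable_pt_lim f x lf -> derivable_pt_lim g x lg ->
  derivable_pt_lim (fun s => f s + g s) x (lf + lg).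
Proof. intros; now apply derivable_pt_lim_plus. Qed.
Lemma dpl_minus f g x lf lg : derivable_pt_lim f x lf -> derivable_pt_lim g x lg ->
  derivable_pt_lim (fun s => f s - g s) x (lf - lg).
Proof. intros; now apply derivable_pt_lim_minus. Qed.
Lemma dpl_mult f g x lf lg : derivable_pt_lim f x lf -> derivable_pt_lim g x lg ->
  derivable_pt_lim (fun s => f s * g s) x (lf * g x + f x * lg).
Proof. intros; now apply derivable_pt_lim_mult. Qed.
Lemma dpl_opp f x lf : derivable_pt_lim f x lf ->
  derivable_pt_lim (fun s => - f s) x (- lf).
Proof. intros; now apply derivable_pt_lim_opp. Qed.
Lemma dpl_exp f x lf : derivable_pt_lim f x lf ->
  derivable_pt_lim (fun s => exp (f s)) x (exp (f x) * lf).
Proof.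
  intros H. apply (derivable_pt_lim_comp f exp x lf (exp (f x))); auto.
  apply derivable_pt_lim_exp.
Qed.
Lemma dpl_eq f x l l' : derivable_pt_lim f x l -> l = l' -> derivable_pt_lim f x l'.
Proof. intros; subst; auto. Qed.
Lemma dpl_ext f g x l : (forall s, f s = g s) -> derivable_pt_lim f x l -> derivable_pt_lim g x l.
Proof.
  intros E H eps Heps. destruct (H eps Heps) as [d Hd]. exists d. intros h Hh Hh'.
  rewrite <- !E. auto.
Qed.

Lemma dpl_loc f g x l r : r > 0 -> (forall s, Rabs (s - x) < r -> f s = g s) ->
  derivable_pt_lim f x l -> derivable_pt_lim g x l.
Proof.
  intros Hr E H eps Heps. destruct (H eps Heps) as [d Hd].
  assert (Hm : 0 < Rmin d r) by (apply Rmin_pos; [apply (cond_pos d)|lra]).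
  exists (mkposreal _ Hm). intros h Hh Hh'. simpl in Hh'.
  rewrite <- (E (x + h)), <- (E x).
  - apply Hd; auto. apply Rlt_le_trans with (1 := Hh'). apply Rmin_l.
  - rewrite Rminus_diag, Rabs_R0; lra.
  - replace (x + h - x) with h by ring. apply Rlt_le_trans with (1 := Hh'). apply Rmin_r.
Qed.

Lemma Dx_ext (U : R -> R -> Prop) (g g' : R -> R -> R) (x y l : R) : openU U -> U x y -> (forall a b, U a b -> g a b = g' a b) ->
  Dx g x y l -> Dx g' x y l.
Proof.
  intros HU Hxy E H. destruct (HU x y Hxy) as [r [Hr Hr']].
  unfold Dx in *. apply (dpl_loc (fun s => g s y) (fun s => g' s y) x l r Hr); auto.
  intros s Hs. apply E, Hr'; auto. rewrite Rminus_diag, Rabs_R0; lra.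
Qed.
Lemma Dy_ext (U : R -> R -> Prop) (g g' : R -> R -> R) (x y l : R) : openU U -> U x y -> (forall a b, U a b -> g a b = g' a b) ->
  Dy g x y l -> Dy g' x y l.
Proof.
  intros HU Hxy E H. destruct (HU x y Hxy) as [r [Hr Hr']].
  unfold Dy in *. apply (dpl_loc (fun s => g x s) (fun s => g' x s) y l r Hr); auto.
  intros s Hs. apply E, Hr'; auto. rewrite Rminus_diag, Rabs_R0; lra.
Qed.
Lemma Dx_uniq (g : R -> R -> R) (x y l1 l2 : R) : Dx g x y l1 -> Dx g x y l2 -> l1 = l2.
Proof. apply uniqueness_limite. Qed.
Lemma Dy_uniq (g : R -> R -> R) (x y l1 l2 : R) : Dy g x y l1 -> Dy g x y l2 -> l1 = l2.
Proof. apply uniqueness_limite. Qed.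

Lemma Dx_constU (U : R -> R -> Prop) (g : R -> R -> R) (k x y l : R) : openU U -> U x y -> (forall a b, U a b -> g a b = k) ->
  Dx g x y l -> l = 0.
Proof.
  intros HU Hxy E H. apply (Dx_uniq g x y); auto.
  apply (Dx_ext U (fun _ _ => k)); auto. intros; symmetry; auto. unfold Dx, Dy; apply dpl_const.
Qed.
Lemma Dy_constU (U : R -> R -> Prop) (g : R -> R -> R) (k x y l : R) : openU U -> U x y -> (forall a b, U a b -> g a b = k) ->
  Dy g x y l -> l = 0.
Proof.
  intros HU Hxy E H. apply (Dy_uniq g x y); auto.
  apply (Dy_ext U (fun _ _ => k)); auto. intros; symmetry; auto. unfold Dx, Dy; apply dpl_const.
Qed.

Lemma Ck_cont k (U : R -> R -> Prop) (g : R -> R -> R) : Ck k U g -> cont2 U g.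
Proof. destruct k; simpl; tauto. Qed.
Lemma Ck_mono k (U : R -> R -> Prop) (g : R -> R -> R) : Ck (S k) U g -> Ck k U g.
Proof.
  revert g; induction k; intros g H.
  - simpl in *; tauto.
  - destruct H as [Hc [gx [gy [Hd [H1 H2]]]]]. split; auto.
    exists gx, gy; split; auto.
Qed.
Lemma Ck_le k m (U : R -> R -> Prop) (g : R -> R -> R) : (m <= k)%nat -> Ck k U g -> Ck m U g.
Proof.
  intros Hle; induction Hle; auto. intros H; apply IHHle, Ck_mono; auto.
Qed.

Lemma schwarz_core (U : R -> R -> Prop) (g gx gy gxy gyx : R -> R -> R) (x y : R) :
  openU U -> U x y ->
  (forall a b, U a b -> Dx g a b (gx a b) /\ Dy g a b (gy a b) /\
                        Dy gx a b (gxy a b) /\ Dx gy a b (gyx a b)) ->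
  cont2 U gxy -> cont2 U gyx -> gxy x y = gyx x y.
Proof.
  intros HU Hxy HD C1 C2.
  destruct (Req_dec (gxy x y) (gyx x y)) as [e|ne]; auto. exfalso.
  set (d := Rabs (gxy x y - gyx x y)).
  assert (Hd : d > 0) by (apply Rabs_pos_lt; lra).
  destruct (HU x y Hxy) as [r [Hr Hr']].
  destruct (C1 x y Hxy (d/2)) as [d1 [Hd1 H1]]; [lra|].
  destruct (C2 x y Hxy (d/2)) as [d2 [Hd2 H2]]; [lra|].
  set (hh := Rmin r (Rmin d1 d2) / 2).
  assert (Hm : 0 < Rmin r (Rmin d1 d2)) by (repeat apply Rmin_pos; lra).
  assert (Hh : 0 < hh) by (unfold hh; lra).
  assert (Hh1 : hh < r) by (unfold hh; pose proof (Rmin_l r (Rmin d1 d2)); lra).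
  assert (Hh2 : hh < d1) by (unfold hh; pose proof (Rmin_r r (Rmin d1 d2)); pose proof (Rmin_l d1 d2); lra).
  assert (Hh3 : hh < d2) by (unfold hh; pose proof (Rmin_r r (Rmin d1 d2)); pose proof (Rmin_r d1 d2); lra).
  assert (InU : forall s t, x <= s <= x + hh -> y <= t <= y + hh -> U s t).
  { intros s t Hs Ht. apply Hr'; apply Rabs_def1; lra. }
  destruct (MVT_cor2 (fun s => g s (y + hh) - g s y) (fun s => gx s (y + hh) - gx s y) x (x + hh))
    as [s1 [E1 Hs1]]; [lra| |].
  { intros c Hc. apply dpl_minus; apply (HD c); apply InU; lra. }
  destruct (MVT_cor2 (fun t => gx s1 t) (fun t => gxy s1 t) y (y + hh)) as [t1 [E2 Ht1]]; [lra| |].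
  { intros c Hc. apply (HD s1 c); apply InU; lra. }
  destruct (MVT_cor2 (fun t => g (x + hh) t - g x t) (fun t => gy (x + hh) t - gy x t) y (y + hh))
    as [t2 [E3 Ht2]]; [lra| |].
  { intros c Hc. apply dpl_minus; apply (HD _ c); apply InU; lra. }
  destruct (MVT_cor2 (fun s => gy s t2) (fun s => gyx s t2) x (x + hh)) as [s2 [E4 Hs2]]; [lra| |].
  { intros c Hc. apply (HD c t2); apply InU; lra. }
  assert (Eq : gxy s1 t1 = gyx s2 t2).
  { replace (x + hh - x) with hh in * by ring. replace (y + hh - y) with hh in * by ring.
    assert (gxy s1 t1 * hh * hh = gyx s2 t2 * hh * hh) by nra.
    apply Rmult_eq_reg_r with (hh * hh); [|nra]. rewrite <- !Rmult_assoc; auto. }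
  assert (A1 : Rabs (gxy s1 t1 - gxy x y) < d / 2) by (apply H1; apply Rabs_def1; lra).
  assert (A2 : Rabs (gyx s2 t2 - gyx x y) < d / 2) by (apply H2; apply Rabs_def1; lra).
  rewrite Eq in A1. unfold d in *.
  revert A1 A2. unfold Rabs. repeat destruct Rcase_abs; lra.
Qed.

Definition S2 (U : R -> R -> Prop) (g gx gy gxy : R -> R -> R) : Prop :=
  forall a b, U a b -> Dx g a b (gx a b) /\ Dy g a b (gy a b) /\
                       Dy gx a b (gxy a b) /\ Dx gy a b (gxy a b).

Lemma schwarz (U : R -> R -> Prop) (g : R -> R -> R) : openU U -> Ck 2 U g -> exists gx gy gxy, S2 U g gx gy gxy /\ Ck 1 U gx /\ Ck 1 U gy.
Proof.
  intros HU [_ [gx [gy [HD [Cx Cy]]]]].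
  pose proof Cx as Cx'. pose proof Cy as Cy'.
  destruct Cx as [_ [gxx [gxy [HDx [_ Cxy]]]]].
  destruct Cy as [_ [gyx [gyy [HDy [Cyx _]]]]].
  exists gx, gy, gxy. split; [|split; auto].
  intros a b Hab.
  assert (E : gxy a b = gyx a b).
  { apply (schwarz_core U g gx gy gxy gyx); auto.
    intros a' b' H'. repeat split; try apply HD; auto; try apply HDx; auto; apply HDy; auto. }
  repeat split; try apply HD; auto; try apply HDx; auto. rewrite E; apply HDy; auto.
Qed.

Lemma schwarz_gen k (U : R -> R -> Prop) (g : R -> R -> R) : openU U -> Ck (S (S k)) U g ->
  exists gx gy gxy, S2 U g gx gy gxy /\ Ck (S k) U gx /\ Ck (S k) U gy.
Proof.
  intros HU [_ [gx [gy [HD [Cx Cy]]]]].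
  pose proof (Ck_le (S k) 1 U gx ltac:(lia) Cx) as Cx1.
  pose proof (Ck_le (S k) 1 U gy ltac:(lia) Cy) as Cy1.
  destruct Cx1 as [_ [gxx [gxy [HDx [_ Cxy]]]]].
  destruct Cy1 as [_ [gyx [gyy [HDy [Cyx _]]]]].
  exists gx, gy, gxy. split; [|split; auto].
  intros a b Hab.
  assert (E : gxy a b = gyx a b).
  { apply (schwarz_core U g gx gy gxy gyx); auto.
    intros a' b' H'. repeat split; try apply HD; auto; try apply HDx; auto; apply HDy; auto. }
  repeat split; try apply HD; auto; try apply HDx; auto. rewrite E; apply HDy; auto.
Qed.

Lemma Ck_partials k (U : R -> R -> Prop) (g : R -> R -> R) : Ck (S k) U g ->
  forall a b, U a b -> exists lx ly, Dx g a b lx /\ Dy g a b ly.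
Proof. intros [_ [gx [gy [HD _]]]] a b H. exists (gx a b), (gy a b). apply HD; auto. Qed.

Lemma S2_ext (U : R -> R -> Prop) (g g' gx gy gxy gx' gy' : R -> R -> R) : openU U ->
  S2 U g gx gy gxy -> (forall a b, U a b -> g a b = g' a b) ->
  (forall a b, U a b -> gx a b = gx' a b) -> (forall a b, U a b -> gy a b = gy' a b) ->
  S2 U g' gx' gy' gxy.
Proof.
  intros HU H E1 E2 E3 a b Hab. destruct (H a b Hab) as [h1 [h2 [h3 h4]]].
  rewrite <- E2, <- E3 by auto.
  repeat split.
  - apply (Dx_ext U g); auto.
  - apply (Dy_ext U g); auto.
  - apply (Dy_ext U gx); auto.
  - apply (Dx_ext U gy); auto.
Qed.

Definition MS (U : R -> R -> Prop) (G : R -> R -> R) (x y : R) : Prop :=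
  forall (Gx Gy : R -> R -> R) l1 l2,
    (forall a b, U a b -> Dx G a b (Gx a b)) -> (forall a b, U a b -> Dy G a b (Gy a b)) ->
    Dy Gx x y l1 -> Dx Gy x y l2 -> l1 = l2.

Lemma MS_S2 (U : R -> R -> Prop) (g gx gy gxy : R -> R -> R) x y :
  openU U -> S2 U g gx gy gxy -> U x y -> MS U g x y.
Proof.
  intros HU H Hxy Gx Gy l1 l2 H1 H2 H3 H4.
  assert (E1 : forall a b, U a b -> Gx a b = gx a b).
  { intros a b Hab; apply (Dx_uniq g a b); auto; apply H; auto. }
  assert (E2 : forall a b, U a b -> Gy a b = gy a b).
  { intros a b Hab; apply (Dy_uniq g a b); auto; apply H; auto. }
  apply (Dy_ext U Gx gx) in H3; auto. apply (Dx_ext U Gy gy) in H4; auto.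
  transitivity (gxy x y).
  - apply (Dy_uniq gx x y); auto; apply H; auto.
  - apply (Dx_uniq gy x y); auto; apply H; auto.
Qed.

Lemma MS_ext (U : R -> R -> Prop) (g g' : R -> R -> R) x y : openU U ->
  (forall a b, U a b -> g a b = g' a b) -> MS U g x y -> MS U g' x y.
Proof.
  intros HU E H Gx Gy l1 l2 H1 H2 H3 H4. apply (H Gx Gy); auto.
  - intros a b Hab; apply (Dx_ext U g'); auto. intros; symmetry; auto.
  - intros a b Hab; apply (Dy_ext U g'); auto. intros; symmetry; auto.
Qed.
Ltac dtac :=
  lazymatch goal with
  | |- derivable_pt_lim (fun _ => ?k) _ _ => apply dpl_const
  | |- derivable_pt_lim (fun s => @?f s + @?g s) _ _ => eapply dpl_plus; [dtac|dtac]
  | |- derivable_pt_lim (fun s => @?f s - @?g s) _ _ => eapply dpl_minus; [dtac|dtac]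
  | |- derivable_pt_lim (fun s => @?f s * @?g s) _ _ => eapply dpl_mult; [dtac|dtac]
  | |- derivable_pt_lim (fun s => - @?f s) _ _ => eapply dpl_opp; dtac
  | |- derivable_pt_lim (fun s => exp (@?f s)) _ _ => eapply dpl_exp; dtac
  | |- derivable_pt_lim (fun s => @?f s / ?k) _ _ =>
      unfold Rdiv; eapply dpl_mult; [dtac|apply dpl_const]
  | |- _ => eassumption
  end.



Lemma S2_const (U : R -> R -> Prop) k : S2 U (fun _ _ => k) (fun _ _ => 0) (fun _ _ => 0) (fun _ _ => 0).
Proof. intros a b _; unfold Dx, Dy; repeat split; apply dpl_const. Qed.

Lemma S2_mul (U : R -> R -> Prop) (g gx gy gxy h hx hy hxy : R -> R -> R) :
  S2 U g gx gy gxy -> S2 U h hx hy hxy ->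
  S2 U (fun a b => g a b * h a b) (fun a b => gx a b * h a b + g a b * hx a b)
       (fun a b => gy a b * h a b + g a b * hy a b)
       (fun a b => gxy a b * h a b + gx a b * hy a b + gy a b * hx a b + g a b * hxy a b).
Proof.
  intros G H a b Hab. destruct (G a b Hab) as [g1 [g2 [g3 g4]]].
  destruct (H a b Hab) as [h1 [h2 [h3 h4]]]. unfold Dx, Dy in *.
  repeat split; (eapply dpl_eq; [dtac|cbv beta; ring]).
Qed.

Lemma S2_exp (U : R -> R -> Prop) (g gx gy gxy : R -> R -> R) :
  S2 U g gx gy gxy ->
  S2 U (fun a b => exp (g a b)) (fun a b => exp (g a b) * gx a b)
       (fun a b => exp (g a b) * gy a b)
       (fun a b => exp (g a b) * gy a b * gx a b + exp (g a b) * gxy a b).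
Proof.
  intros G a b Hab. destruct (G a b Hab) as [g1 [g2 [g3 g4]]]. unfold Dx, Dy in *.
  repeat split; (eapply dpl_eq; [dtac|cbv beta; ring]).
Qed.

Lemma S2_opp (U : R -> R -> Prop) (g gx gy gxy : R -> R -> R) :
  S2 U g gx gy gxy ->
  S2 U (fun a b => - g a b) (fun a b => - gx a b) (fun a b => - gy a b) (fun a b => - gxy a b).
Proof.
  intros G a b Hab. destruct (G a b Hab) as [g1 [g2 [g3 g4]]]. unfold Dx, Dy in *.
  repeat split; (eapply dpl_eq; [dtac|cbv beta; ring]).
Qed.


Lemma vec5 (P : nat -> R -> Prop) : (forall i, (i < 5)%nat -> exists l, P i l) ->
  exists v : VR, forall i, (i < 5)%nat -> P i (v i).
Proof.
  intros H.
  destruct (H 0%nat ltac:(lia)) as [l0 H0]. destruct (H 1%nat ltac:(lia)) as [l1 H1].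
  destruct (H 2%nat ltac:(lia)) as [l2 H2]. destruct (H 3%nat ltac:(lia)) as [l3 H3].
  destruct (H 4%nat ltac:(lia)) as [l4 H4].
  exists (fun i => match i with 0 => l0 | 1 => l1 | 2 => l2 | 3 => l3 | _ => l4 end)%nat.
  intros i Hi. do 5 (destruct i as [|i]; auto). lia.
Qed.

Lemma lt5 (P : nat -> Prop) : P 0%nat -> P 1%nat -> P 2%nat -> P 3%nat -> P 4%nat ->
  forall i, (i < 5)%nat -> P i.
Proof. intros. do 5 (destruct i as [|i]; auto). lia. Qed.

Section GMC.
Variables (U : R -> R -> Prop) (F X Y : R -> R -> nat -> nat -> R) (x y : R).
Variables (Xy Yx : nat -> nat -> R).
Hypothesis HU : openU U.
Hypothesis Hp : U x y.
Hypothesis H1 : forall a b, U a b -> forall i j, (i < 5)%nat -> (j < 5)%nat ->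
  Dx (fun a b => F a b i j) a b (sum5 (fun k => F a b i k * X a b k j)) /\
  Dy (fun a b => F a b i j) a b (sum5 (fun k => F a b i k * Y a b k j)).
Hypothesis H2 : forall k j, (k < 5)%nat -> (j < 5)%nat ->
  Dy (fun a b => X a b k j) x y (Xy k j) /\ Dx (fun a b => Y a b k j) x y (Yx k j).
Hypothesis H3 : forall i j, (i < 5)%nat -> (j < 5)%nat -> MS U (fun a b => F a b i j) x y.
Hypothesis H4 : forall i j, (i < 5)%nat -> (j < 5)%nat ->
  sum5 (fun k => eta k * F x y k i * F x y k j) = (if Nat.eqb i j then eta i else 0).

Definition Om i j := Yx i j - Xy i j + sum5 (fun k => X x y i k * Y x y k j - Y x y i k * X x y k j).

Lemma gmc_row i j : (i < 5)%nat -> (j < 5)%nat -> sum5 (fun m => F x y i m * Om m j) = 0.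
Proof.
  intros Hi Hj.
  assert (E : sum5 (fun k => sum5 (fun m => F x y i m * Y x y m k) * X x y k j + F x y i k * Xy k j) =
              sum5 (fun k => sum5 (fun m => F x y i m * X x y m k) * Y x y k j + F x y i k * Yx k j)).
  { apply (H3 i j Hi Hj (fun a b => sum5 (fun k => F a b i k * X a b k j))
                        (fun a b => sum5 (fun k => F a b i k * Y a b k j))).
    - intros a b Hab; apply H1; auto.
    - intros a b Hab; apply H1; auto.
    - unfold Dy, sum5.
      destruct (H1 x y Hp i 0 Hi ltac:(lia)) as [_ a0]. destruct (H1 x y Hp i 1 Hi ltac:(lia)) as [_ a1].
      destruct (H1 x y Hp i 2 Hi ltac:(lia)) as [_ a2]. destruct (H1 x y Hp i 3 Hi ltac:(lia)) as [_ a3].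
      destruct (H1 x y Hp i 4 Hi ltac:(lia)) as [_ a4].
      destruct (H2 0 j ltac:(lia) Hj) as [b0 _]. destruct (H2 1 j ltac:(lia) Hj) as [b1 _].
      destruct (H2 2 j ltac:(lia) Hj) as [b2 _]. destruct (H2 3 j ltac:(lia) Hj) as [b3 _].
      destruct (H2 4 j ltac:(lia) Hj) as [b4 _]. unfold Dy in *.
      eapply dpl_eq; [dtac|cbv beta; unfold sum5; ring].
    - unfold Dx, sum5.
      destruct (H1 x y Hp i 0 Hi ltac:(lia)) as [a0 _]. destruct (H1 x y Hp i 1 Hi ltac:(lia)) as [a1 _].
      destruct (H1 x y Hp i 2 Hi ltac:(lia)) as [a2 _]. destruct (H1 x y Hp i 3 Hi ltac:(lia)) as [a3 _].
      destruct (H1 x y Hp i 4 Hi ltac:(lia)) as [a4 _].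
      destruct (H2 0 j ltac:(lia) Hj) as [_ b0]. destruct (H2 1 j ltac:(lia) Hj) as [_ b1].
      destruct (H2 2 j ltac:(lia) Hj) as [_ b2]. destruct (H2 3 j ltac:(lia) Hj) as [_ b3].
      destruct (H2 4 j ltac:(lia) Hj) as [_ b4]. unfold Dx in *.
      eapply dpl_eq; [dtac|cbv beta; unfold sum5; ring]. }
  unfold Om, sum5 in *. lra.
Qed.

Lemma gmc i j : (i < 5)%nat -> (j < 5)%nat -> Om i j = 0.
Proof.
  intros Hi Hj.
  pose proof (gmc_row 0 j ltac:(lia) Hj) as R0. pose proof (gmc_row 1 j ltac:(lia) Hj) as R1.
  pose proof (gmc_row 2 j ltac:(lia) Hj) as R2. pose proof (gmc_row 3 j ltac:(lia) Hj) as R3.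
  pose proof (gmc_row 4 j ltac:(lia) Hj) as R4.
  assert (G : forall l, (l < 5)%nat -> sum5 (fun m => sum5 (fun k => eta k * F x y k l * F x y k m) * Om m j) = 0).
  { intros l Hl. unfold sum5 in *. 
    transitivity (eta 0 * F x y 0 l * (F x y 0 0 * Om 0 j + F x y 0 1 * Om 1 j + F x y 0 2 * Om 2 j + F x y 0 3 * Om 3 j + F x y 0 4 * Om 4 j)
      + eta 1 * F x y 1 l * (F x y 1 0 * Om 0 j + F x y 1 1 * Om 1 j + F x y 1 2 * Om 2 j + F x y 1 3 * Om 3 j + F x y 1 4 * Om 4 j)
      + eta 2 * F x y 2 l * (F x y 2 0 * Om 0 j + F x y 2 1 * Om 1 j + F x y 2 2 * Om 2 j + F x y 2 3 * Om 3 j + F x y 2 4 * Om 4 j)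
      + eta 3 * F x y 3 l * (F x y 3 0 * Om 0 j + F x y 3 1 * Om 1 j + F x y 3 2 * Om 2 j + F x y 3 3 * Om 3 j + F x y 3 4 * Om 4 j)
      + eta 4 * F x y 4 l * (F x y 4 0 * Om 0 j + F x y 4 1 * Om 1 j + F x y 4 2 * Om 2 j + F x y 4 3 * Om 3 j + F x y 4 4 * Om 4 j)).
    - ring.
    - rewrite R0, R1, R2, R3, R4. ring. }
  revert i Hi. apply lt5.
  all: match goal with |- Om ?l _ = 0 => pose proof (G l ltac:(lia)) as Gl end.
  all: unfold sum5 at 1 in Gl; cbv beta in Gl.
  all: rewrite (H4 _ 0) in Gl by lia; rewrite (H4 _ 1) in Gl by lia; rewrite (H4 _ 2) in Gl by lia;
       rewrite (H4 _ 3) in Gl by lia; rewrite (H4 _ 4) in Gl by lia.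
  all: unfold sum5, eta in Gl; simpl in Gl; lra.
Qed.
End GMC.

Definition vscal (k : R) (v : VR) : VR := fun i => k * v i.
Definition vlin (k1 : R) (v1 : VR) (k2 : R) (v2 : VR) : VR := fun i => k1 * v1 i + k2 * v2 i.
Lemma ip_sym a b : inner5 a b = inner5 b a.
Proof. unfold inner5, sum5; ring. Qed.
Lemma ip_scal_r k a b : inner5 a (vscal k b) = k * inner5 a b.
Proof. unfold inner5, sum5, vscal; ring. Qed.
Lemma ip_scal_l k a b : inner5 (vscal k a) b = k * inner5 a b.
Proof. unfold inner5, sum5, vscal; ring. Qed.
Lemma ip_lin_r k1 k2 a b1 b2 : inner5 a (vlin k1 b1 k2 b2) = k1 * inner5 a b1 + k2 * inner5 a b2.
Proof. unfold inner5, sum5, vlin; ring. Qed.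
Lemma ip_ext_l a a' b : (forall i, (i < 5)%nat -> a i = a' i) -> inner5 a b = inner5 a' b.
Proof. intros H. unfold inner5, sum5. rewrite !H by lia. reflexivity. Qed.

Lemma Dinner (A B : R -> VR) (Ax Bx : VR) x :
  (forall i, (i < 5)%nat -> derivable_pt_lim (fun s => A s i) x (Ax i)) ->
  (forall i, (i < 5)%nat -> derivable_pt_lim (fun s => B s i) x (Bx i)) ->
  derivable_pt_lim (fun s => inner5 (A s) (B s)) x (inner5 Ax (B x) + inner5 (A x) Bx).
Proof.
  intros HA HB. unfold inner5, sum5.
  pose proof (HA 0%nat ltac:(lia)). pose proof (HA 1%nat ltac:(lia)). pose proof (HA 2%nat ltac:(lia)).
  pose proof (HA 3%nat ltac:(lia)). pose proof (HA 4%nat ltac:(lia)).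
  pose proof (HB 0%nat ltac:(lia)). pose proof (HB 1%nat ltac:(lia)). pose proof (HB 2%nat ltac:(lia)).
  pose proof (HB 3%nat ltac:(lia)). pose proof (HB 4%nat ltac:(lia)).
  eapply dpl_eq; [dtac|cbv beta; ring].
Qed.

Lemma DipX (U : R -> R -> Prop) (A B : R -> R -> VR) (g : R -> R -> R) (Ax Bx : VR) a b l :
  openU U -> U a b ->
  (forall i, (i < 5)%nat -> Dx (fun a b => A a b i) a b (Ax i)) ->
  (forall i, (i < 5)%nat -> Dx (fun a b => B a b i) a b (Bx i)) ->
  (forall a' b', U a' b' -> inner5 (A a' b') (B a' b') = g a' b') ->
  Dx g a b l -> inner5 Ax (B a b) + inner5 (A a b) Bx = l.
Proof.
  intros HU Hab HA HB E Hg. apply (Dx_uniq g a b); auto.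
  apply (Dx_ext U (fun a b => inner5 (A a b) (B a b))); auto.
  apply (Dinner (fun s => A s b) (fun s => B s b)); auto.
Qed.
Lemma DipY (U : R -> R -> Prop) (A B : R -> R -> VR) (g : R -> R -> R) (Ay By : VR) a b l :
  openU U -> U a b ->
  (forall i, (i < 5)%nat -> Dy (fun a b => A a b i) a b (Ay i)) ->
  (forall i, (i < 5)%nat -> Dy (fun a b => B a b i) a b (By i)) ->
  (forall a' b', U a' b' -> inner5 (A a' b') (B a' b') = g a' b') ->
  Dy g a b l -> inner5 Ay (B a b) + inner5 (A a b) By = l.
Proof.
  intros HU Hab HA HB E Hg. apply (Dy_uniq g a b); auto.
  apply (Dy_ext U (fun a b => inner5 (A a b) (B a b))); auto.
  apply (Dinner (fun s => A a s) (fun s => B a s)); auto.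
Qed.

Module MCpart.
From mathcomp Require Import all_boot all_algebra.
From mathcomp Require Import Rstruct.
Import GRing.Theory.
Lemma right_inv5 (F L : nat -> nat -> R) :
  (forall i j, lt i 5 -> lt j 5 ->
     sum5 (fun k => Rmult (L i k) (F k j)) = (if Nat.eqb i j then R1 else R0)) ->
  forall i j, lt i 5 -> lt j 5 ->
     sum5 (fun k => Rmult (F i k) (L k j)) = (if Nat.eqb i j then R1 else R0).
Proof.
move=> H i j Hi Hj.
pose MF := (\matrix_(a < 5, b < 5) F a b)%R : 'M[R]_5.
pose ML := (\matrix_(a < 5, b < 5) L a b)%R : 'M[R]_5.
have e : (ML *m MF)%R = 1%:M%R.
  apply/matrixP => a b; rewrite !mxE.
  rewrite !big_ord_recr big_ord0 /= !mxE.
  have := H a b (elimT ltP (ltn_ord a)) (elimT ltP (ltn_ord b)).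
  rewrite /sum5 /= => HH; rewrite add0r; etransitivity; first exact HH.
  case E: (Nat.eqb a b); case: eqP => [ab|nab] //.
    exfalso; apply: nab; apply/val_inj; exact (proj1 (Nat.eqb_eq _ _) E).
  by rewrite ab Nat.eqb_refl in E.
have := mulmx1C e => /matrixP /(_ (Ordinal (introT ltP Hi)) (Ordinal (introT ltP Hj))).
rewrite !mxE !big_ord_recr big_ord0 /= !mxE /sum5 /= add0r => HH; etransitivity; first exact HH.
case E: (Nat.eqb i j); case: eqP => [ab|nab] //.
  exfalso; apply: nab; apply/val_inj; exact (proj1 (Nat.eqb_eq _ _) E).
by case: ab => ab; rewrite ab Nat.eqb_refl in E.
Qed.
End MCpart.

Lemma expand (M : nat -> nat -> R) (V : VR) :
  (forall i j, (i < 5)%nat -> (j < 5)%nat ->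
     sum5 (fun k => eta k * M k i * M k j) = (if Nat.eqb i j then eta i else 0)) ->
  forall i, (i < 5)%nat -> V i = sum5 (fun k => M i k * (eta k * inner5 (fun m => M m k) V)).
Proof.
  intros H.
  pose (L := fun k m => eta k * M m k * eta m).
  assert (HL : forall i j, (i < 5)%nat -> (j < 5)%nat ->
     sum5 (fun k => Rmult (L i k) (M k j)) = (if Nat.eqb i j then R1 else R0)).
  { intros i j Hi Hj. unfold L.
    transitivity (eta i * sum5 (fun k => eta k * M k i * M k j)).
    - unfold sum5; ring.
    - rewrite H by auto. destruct (Nat.eqb i j); [|ring].
      revert i Hi. apply lt5; unfold eta; simpl; ring. }
  pose proof (MCpart.right_inv5 M L HL) as HR.
  intros i Hi.
  transitivity (sum5 (fun m => (if Nat.eqb i m then R1 else R0) * V m)).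
  - revert i Hi. apply lt5; unfold sum5; simpl; ring.
  - transitivity (sum5 (fun m => sum5 (fun k => Rmult (M i k) (L k m)) * V m)).
    + unfold sum5 at 1 2. rewrite !HR by lia. reflexivity.
    + unfold L, inner5, sum5. ring.
Qed.

Import Defs.
Open Scope R_scope.

Section Geo.
Variables (U : R -> R -> Prop)
  (f F1 F2 N1 N2 : R -> R -> VR) (u h : R -> R -> R) (xi : R -> R -> Cx) (c : R)
  (fz : R -> R -> VC) (uz : R -> R -> Cx).
Hypothesis HU : openU U.
Hypothesis Hreg : forall i, (i < 5)%nat ->
     smooth U (fun x y => f x y i) /\ smooth U (fun x y => N1 x y i) /\
     smooth U (fun x y => N2 x y i).
Hypothesis Hu : smooth U u.
Hypothesis Hh : smooth U h.
Hypothesis Hxr : smooth U (fun x y => cre (xi x y)).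
Hypothesis Hxim : smooth U (fun x y => cim (xi x y)).
Hypothesis Hsph : forall x y, U x y -> inner5 (f x y) (f x y) = 1.
Hypothesis Hfz : forall x y, U x y -> HasDzV f x y (fz x y).
Hypothesis HF12 : forall x y, U x y -> forall i, (i < 5)%nat ->
     fz x y i = Cscal (exp (u x y) / sqrt 2) (mkC (F1 x y i) (- F2 x y i)).
Hypothesis Hnorm : forall x y, U x y ->
     inner5 (N1 x y) (N1 x y) = 1 /\ inner5 (N2 x y) (N2 x y) = -1 /\
     inner5 (N1 x y) (N2 x y) = 0 /\
     inner5 (N1 x y) (f x y) = 0 /\ inner5 (N2 x y) (f x y) = 0 /\
     inner5 (N1 x y) (F1 x y) = 0 /\ inner5 (N1 x y) (F2 x y) = 0 /\
     inner5 (N2 x y) (F1 x y) = 0 /\ inner5 (N2 x y) (F2 x y) = 0 /\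
     - N2 x y 4%nat < 0.
Hypothesis HSO : forall x y, U x y -> SOp41 (Fmat f F1 F2 N1 N2 x y).
Hypothesis Hpar : forall x y, U x y -> forall w, HasDzV N1 x y w -> cinner w (VtoC (N2 x y)) = C0.
Hypothesis Hc : c <> 0.
Hypothesis Hxi : forall x y, U x y -> forall w, HasDzCV fz x y w ->
     cinner w (VtoC (N1 x y)) = Cadd (xi x y) (RtoC c) /\
     Copp (cinner w (VtoC (N2 x y))) = xi x y.
Hypothesis Hzzb : forall x y, U x y -> forall w, HasDzbCV fz x y w -> forall i, (i < 5)%nat ->
     w i = RtoC (exp (2 * u x y) * (- f x y i + h x y * (N1 x y i + N2 x y i))).
Hypothesis Huz : forall x y, U x y -> HasDz (fun a b => RtoC (u a b)) x y (uz x y).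

Definition Ef a b := exp (u a b) / sqrt 2.
Definition Pf a b i := 2 * Ef a b * F1 a b i.
Definition Qf a b i := 2 * Ef a b * F2 a b i.
Definition phi a b := exp (- u a b) * / sqrt 2.

Lemma sqrt2_pos : 0 < sqrt 2.
Proof. apply sqrt_lt_R0; lra. Qed.
Lemma sqrt2_sq : sqrt 2 * sqrt 2 = 2.
Proof. apply sqrt_sqrt; lra. Qed.

Lemma s2_2 : sqrt 2 ^ 2 = 2. Proof. simpl. rewrite Rmult_1_r. apply sqrt2_sq. Qed.
Lemma s2_3 : sqrt 2 ^ 3 = 2 * sqrt 2. Proof. replace (sqrt 2 ^ 3) with (sqrt 2 ^ 2 * sqrt 2) by ring; rewrite s2_2; ring. Qed.
Lemma s2_4 : sqrt 2 ^ 4 = 4. Proof. replace (sqrt 2 ^ 4) with (sqrt 2 ^ 2 * sqrt 2 ^ 2) by ring; rewrite s2_2; ring. Qed.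
Lemma s2_5 : sqrt 2 ^ 5 = 4 * sqrt 2. Proof. replace (sqrt 2 ^ 5) with (sqrt 2 ^ 4 * sqrt 2) by ring; rewrite s2_4; ring. Qed.
Lemma s2_6 : sqrt 2 ^ 6 = 8. Proof. replace (sqrt 2 ^ 6) with (sqrt 2 ^ 4 * sqrt 2 ^ 2) by ring; rewrite s2_4, s2_2; ring. Qed.
Lemma s2_7 : sqrt 2 ^ 7 = 8 * sqrt 2. Proof. replace (sqrt 2 ^ 7) with (sqrt 2 ^ 6 * sqrt 2) by ring; rewrite s2_6; ring. Qed.
Lemma s2_8 : sqrt 2 ^ 8 = 16. Proof. replace (sqrt 2 ^ 8) with (sqrt 2 ^ 4 * sqrt 2 ^ 4) by ring; rewrite s2_4; ring. Qed.
Ltac s2red := try ring; ring_simplify; rewrite ?s2_8, ?s2_7, ?s2_6, ?s2_5, ?s2_4, ?s2_3, ?s2_2; ring.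

Lemma F1_Pf a b i : F1 a b i = Pf a b i * phi a b.
Proof.
  unfold Pf, phi, Ef. rewrite exp_Ropp. pose proof sqrt2_pos. pose proof sqrt2_sq.
  pose proof (exp_pos (u a b)). field_simplify_eq; [s2red|lra].
Qed.
Lemma F2_Qf a b i : F2 a b i = Qf a b i * phi a b.
Proof.
  unfold Qf, phi, Ef. rewrite exp_Ropp. pose proof sqrt2_pos. pose proof sqrt2_sq.
  pose proof (exp_pos (u a b)). field_simplify_eq; [s2red|lra].
Qed.

Lemma fz_form a b : U a b -> forall i, (i < 5)%nat ->
  Dx (fun a b => f a b i) a b (Pf a b i) /\ Dy (fun a b => f a b i) a b (Qf a b i).
Proof.
  intros Hab i Hi. destruct (Hfz a b Hab i Hi) as [ax [ay [bx [bY [H1 [H2 [H3 [H4 E]]]]]]]].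
  simpl in H3, H4.
  assert (bx = 0) by (apply (Dx_uniq (fun _ _ => 0) a b); auto; unfold Dx; apply dpl_const).
  assert (bY = 0) by (apply (Dy_uniq (fun _ _ => 0) a b); auto; unfold Dy; apply dpl_const).
  subst. rewrite HF12 in E by auto. unfold Cscal in E; simpl in E. injection E; intros E2 E1.
  split.
  - replace (Pf a b i) with ax; auto. unfold Pf, Ef. lra.
  - replace (Qf a b i) with ay; auto. unfold Qf, Ef. lra.
Qed.

Lemma f_comp i : (i < 5)%nat -> exists fxy fxx fyy fxxy fyyx : R -> R -> R,
  S2 U (fun a b => f a b i) (fun a b => Pf a b i) (fun a b => Qf a b i) fxy /\
  S2 U (fun a b => Pf a b i) fxx fxy fxxy /\ S2 U (fun a b => Qf a b i) fxy fyy fyyx.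
Proof.
  intros Hi. destruct (Hreg i Hi) as [Hf _].
  destruct (schwarz_gen 2 U _ HU (Hf 4%nat)) as [fx [fy [fxy [S [Cfx Cfy]]]]].
  destruct (schwarz_gen 1 U _ HU Cfx) as [fxx [fxy' [fxxy [Sx _]]]].
  destruct (schwarz_gen 1 U _ HU Cfy) as [fyx' [fyy [fyyx [Sy _]]]].
  assert (E1 : forall a b, U a b -> fx a b = Pf a b i).
  { intros a b Hab. apply (Dx_uniq (fun a b => f a b i) a b). apply S; auto. apply fz_form; auto. }
  assert (E2 : forall a b, U a b -> fy a b = Qf a b i).
  { intros a b Hab. apply (Dy_uniq (fun a b => f a b i) a b). apply S; auto. apply fz_form; auto. }
  assert (E3 : forall a b, U a b -> fxy' a b = fxy a b).
  { intros a b Hab. apply (Dy_uniq fx a b). apply Sx; auto. apply S; auto. }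
  assert (E4 : forall a b, U a b -> fyx' a b = fxy a b).
  { intros a b Hab. apply (Dx_uniq fy a b). apply Sy; auto. apply S; auto. }
  exists fxy, fxx, fyy, fxxy, fyyx. split; [|split].
  - eapply (S2_ext U _ _ fx fy); eauto.
  - eapply (S2_ext U fx _ fxx fxy'); eauto.
  - eapply (S2_ext U fy _ fyx' fyy); eauto.
Qed.

Lemma finish_col (M : nat -> nat -> R) (Xc : nat -> R) (D : VR) :
  (forall i j, (i < 5)%nat -> (j < 5)%nat ->
     sum5 (fun k => eta k * M k i * M k j) = (if Nat.eqb i j then eta i else 0)) ->
  (forall k, (k < 5)%nat -> Xc k = eta k * inner5 (fun m => M m k) D) ->
  forall i, (i < 5)%nat -> D i = sum5 (fun k => M i k * Xc k).
Proof.
  intros H H0 i Hi. rewrite (expand M D H i Hi). unfold sum5. rewrite !H0 by lia. reflexivity.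
Qed.
Lemma Dx_eq (g : R -> R -> R) a b l l' : Dx g a b l -> l = l' -> Dx g a b l'.
Proof. intros; subst; auto. Qed.
Lemma Dy_eq (g : R -> R -> R) a b l l' : Dy g a b l -> l = l' -> Dy g a b l'.
Proof. intros; subst; auto. Qed.

Ltac onrw_core OnS i j := match goal with |- context [inner5 ?X ?Y] =>
  rewrite (OnS _ _ ltac:(eassumption) i j (inner5 X Y)); [|lia|lia|reflexivity] end.

Section WithU.
Variables (ux uy uxy : R -> R -> R).
Hypothesis HuS : S2 U u ux uy uxy.

Lemma phi_S2 : exists px py pxy, S2 U phi px py pxy.
Proof.
  eexists; eexists; eexists. unfold phi.
  apply (S2_mul U (fun a b => exp (- u a b))); [apply S2_exp, S2_opp, HuS| apply S2_const].
Qed.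

Lemma MS_F x y : U x y -> forall i j, (i < 5)%nat -> (j < 5)%nat ->
  MS U (fun a b => Fmat f F1 F2 N1 N2 a b i j) x y.
Proof.
  intros Hxy i j Hi Hj. destruct phi_S2 as [px [py [pxy Sp]]].
  destruct (f_comp i Hi) as [fxy [fxx [fyy [fxxy [fyyx [S0 [SP SQ]]]]]]].
  destruct (Hreg i Hi) as [_ [HN1 HN2]].
  revert j Hj. apply lt5; unfold Fmat.
  - apply (MS_S2 U _ _ _ _ _ _ HU S0 Hxy).
  - apply (MS_ext U (fun a b => Pf a b i * phi a b)); auto.
    + intros; symmetry; apply F1_Pf.
    + exact (MS_S2 U _ _ _ _ _ _ HU (S2_mul U _ _ _ _ _ _ _ _ SP Sp) Hxy).
  - apply (MS_ext U (fun a b => Qf a b i * phi a b)); auto.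
    + intros; symmetry; apply F2_Qf.
    + exact (MS_S2 U _ _ _ _ _ _ HU (S2_mul U _ _ _ _ _ _ _ _ SQ Sp) Hxy).
  - destruct (schwarz U _ HU (HN1 2%nat)) as [a1 [a2 [a3 [S _]]]].
    apply (MS_S2 U _ _ _ _ _ _ HU S Hxy).
  - destruct (schwarz U _ HU (HN2 2%nat)) as [a1 [a2 [a3 [S _]]]].
    apply (MS_S2 U _ _ _ _ _ _ HU S Hxy).
Qed.

Lemma Dphi a b : U a b -> Dx phi a b (- ux a b * phi a b) /\ Dy phi a b (- uy a b * phi a b).
Proof.
  intros Hab. destruct (HuS a b Hab) as [h1 [h2 _]]. unfold Dx, Dy, phi in *.
  split; (eapply dpl_eq; [dtac|cbv beta; ring]).
Qed.

Lemma struct_eq a b : U a b -> forall i j, (i < 5)%nat -> (j < 5)%nat ->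
  Dx (fun a b => Fmat f F1 F2 N1 N2 a b i j) a b
     (sum5 (fun k => Fmat f F1 F2 N1 N2 a b i k * alpha_x (Afield 0 c u h uz xi a b) k j)) /\
  Dy (fun a b => Fmat f F1 F2 N1 N2 a b i j) a b
     (sum5 (fun k => Fmat f F1 F2 N1 N2 a b i k * alpha_y (Afield 0 c u h uz xi a b) k j)).
Proof.
  intros Hab.
  destruct (vec5 (fun i l => Dx (fun a b => Pf a b i) a b l)) as [Pxx HPxx].
  { intros i Hi; destruct (f_comp i Hi) as [? [? [? [? [? [_ [SP _]]]]]]]. eexists; apply SP; auto. }
  destruct (vec5 (fun i l => Dy (fun a b => Pf a b i) a b l /\ Dx (fun a b => Qf a b i) a b l)) as [Pxy HPxy].
  { intros i Hi; destruct (f_comp i Hi) as [? [? [? [? [? [_ [SP SQ]]]]]]]. eexists; split; [apply SP|apply SQ]; auto. }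
  destruct (vec5 (fun i l => Dy (fun a b => Qf a b i) a b l)) as [Qyy HQyy].
  { intros i Hi; destruct (f_comp i Hi) as [? [? [? [? [? [_ [_ SQ]]]]]]]. eexists; apply SQ; auto. }
  destruct (vec5 (fun i l => Dx (fun a b => N1 a b i) a b l)) as [N1x HN1x].
  { intros i Hi. destruct (Ck_partials 0 U _ (proj1 (proj2 (Hreg i Hi)) 1%nat) a b Hab) as [l1 [l2 [H1 H2]]]. eauto. }
  destruct (vec5 (fun i l => Dy (fun a b => N1 a b i) a b l)) as [N1y HN1y].
  { intros i Hi. destruct (Ck_partials 0 U _ (proj1 (proj2 (Hreg i Hi)) 1%nat) a b Hab) as [l1 [l2 [H1 H2]]]. eauto. }
  destruct (vec5 (fun i l => Dx (fun a b => N2 a b i) a b l)) as [N2x HN2x].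
  { intros i Hi. destruct (Ck_partials 0 U _ (proj2 (proj2 (Hreg i Hi)) 1%nat) a b Hab) as [l1 [l2 [H1 H2]]]. eauto. }
  destruct (vec5 (fun i l => Dy (fun a b => N2 a b i) a b l)) as [N2y HN2y].
  { intros i Hi. destruct (Ck_partials 0 U _ (proj2 (proj2 (Hreg i Hi)) 1%nat) a b Hab) as [l1 [l2 [H1 H2]]]. eauto. }
  assert (Hfx : forall i, (i < 5)%nat -> Dx (fun a b => f a b i) a b (Pf a b i)) by (intros; apply fz_form; auto).
  assert (Hfy : forall i, (i < 5)%nat -> Dy (fun a b => f a b i) a b (Qf a b i)) by (intros; apply fz_form; auto).
  assert (HPxx' := HPxx). assert (HPxy1 : forall i, (i < 5)%nat -> Dy (fun a b => Pf a b i) a b (Pxy i)) by (intros; apply HPxy; auto).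
  assert (HPxy2 : forall i, (i < 5)%nat -> Dx (fun a b => Qf a b i) a b (Pxy i)) by (intros; apply HPxy; auto).
  clear HPxx' HPxy.
  destruct (Dphi a b Hab) as [Hphx Hphy].
  destruct (HuS a b Hab) as [Hux [Huy _]].
  assert (Euz : uz a b = mkC (ux a b / 2) (- uy a b / 2)).
  { destruct (Huz a b Hab) as [ax [ay [bx [bY [H1 [H2 [H3 [H4 E]]]]]]]]. simpl in H3, H4.
    assert (bx = 0) by (apply (Dx_uniq (fun _ _ => 0) a b); auto; unfold Dx; apply dpl_const).
    assert (bY = 0) by (apply (Dy_uniq (fun _ _ => 0) a b); auto; unfold Dy; apply dpl_const).
    assert (ax = ux a b) by (apply (Dx_uniq u a b); auto).
    assert (ay = uy a b) by (apply (Dy_uniq u a b); auto).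
    subst. rewrite E. f_equal; lra. }
  destruct (HSO a b Hab) as [Hon _].
  assert (Hsph' := Hsph a b Hab).
  destruct (Hnorm a b Hab) as [o33 [o44 [o34 [o30 [o40 [o31 [o32 [o41 [o42 _]]]]]]]]].
  assert (o11 : inner5 (F1 a b) (F1 a b) = 1) by exact (Hon 1%nat 1%nat ltac:(lia) ltac:(lia)).
  assert (o22 : inner5 (F2 a b) (F2 a b) = 1) by exact (Hon 2%nat 2%nat ltac:(lia) ltac:(lia)).
  assert (o01 : inner5 (f a b) (F1 a b) = 0) by exact (Hon 0%nat 1%nat ltac:(lia) ltac:(lia)).
  assert (o02 : inner5 (f a b) (F2 a b) = 0) by exact (Hon 0%nat 2%nat ltac:(lia) ltac:(lia)).
  assert (o12 : inner5 (F1 a b) (F2 a b) = 0) by exact (Hon 1%nat 2%nat ltac:(lia) ltac:(lia)).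
  assert (ePf : forall a b, Pf a b = vscal (2 * Ef a b) (F1 a b)) by reflexivity.
  assert (eQf : forall a b, Qf a b = vscal (2 * Ef a b) (F2 a b)) by reflexivity.

  set (E := Ef a b).
  assert (HE : E > 0) by (unfold E, Ef; apply Rdiv_lt_0_compat; [apply exp_pos|apply sqrt2_pos]).
  assert (HxPf : forall i, (i < 5)%nat -> Dx (fun a b => Pf a b i) a b (Pxx i)) by exact HPxx.
  clear HPxx.
  assert (G0 : Dx (fun _ _ => 0) a b 0) by (unfold Dx; apply dpl_const).
  assert (G0' : Dy (fun _ _ => 0) a b 0) by (unfold Dy; apply dpl_const).
  assert (G4x : Dx (fun a b => 4 * Ef a b * Ef a b) a b (8 * E * E * ux a b)).
  { unfold Dx, E, Ef. eapply dpl_eq; [dtac|cbv beta; field; apply Rgt_not_eq, sqrt2_pos]. }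
  assert (G4y : Dy (fun a b => 4 * Ef a b * Ef a b) a b (8 * E * E * uy a b)).
  { unfold Dy, E, Ef. eapply dpl_eq; [dtac|cbv beta; field; apply Rgt_not_eq, sqrt2_pos]. }
  assert (On : forall a b, U a b -> forall i j, (i < 5)%nat -> (j < 5)%nat ->
     inner5 (fun m => Fmat f F1 F2 N1 N2 a b m i) (fun m => Fmat f F1 F2 N1 N2 a b m j) =
     (if Nat.eqb i j then eta i else 0)) by (intros; apply HSO; auto).
  assert (OnS : forall a b, U a b -> forall i j X, (i < 5)%nat -> (j < 5)%nat ->
     X = inner5 (fun m => Fmat f F1 F2 N1 N2 a b m i) (fun m => Fmat f F1 F2 N1 N2 a b m j) ->
     X = (if Nat.eqb i j then eta i else 0)) by (intros; subst; apply HSO; auto).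

  assert (K0 : forall a b, U a b -> inner5 (f a b) (Pf a b) = 0).
  { intros a' b' H'. rewrite ePf, ip_scal_r. onrw_core OnS 0%nat 1%nat. unfold eta; simpl; ring. }
  assert (K1 : forall a b, U a b -> inner5 (f a b) (Qf a b) = 0).
  { intros a' b' H'. rewrite eQf, ip_scal_r. onrw_core OnS 0%nat 2%nat. unfold eta; simpl; ring. }
  assert (K2 : forall a b, U a b -> inner5 (Pf a b) (Pf a b) = 4 * Ef a b * Ef a b).
  { intros a' b' H'. rewrite ePf, ip_scal_r, ip_scal_l. onrw_core OnS 1%nat 1%nat. unfold eta; simpl; ring. }
  assert (K3 : forall a b, U a b -> inner5 (Qf a b) (Qf a b) = 4 * Ef a b * Ef a b).
  { intros a' b' H'. rewrite eQf, ip_scal_r, ip_scal_l. onrw_core OnS 2%nat 2%nat. unfold eta; simpl; ring. }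
  assert (K4 : forall a b, U a b -> inner5 (Pf a b) (Qf a b) = 0).
  { intros a' b' H'. rewrite ePf, eQf, ip_scal_r, ip_scal_l. onrw_core OnS 1%nat 2%nat. unfold eta; simpl; ring. }
  assert (K5 : forall a b, U a b -> inner5 (Pf a b) (N1 a b) = 0).
  { intros a' b' H'. rewrite ePf, ip_scal_l. onrw_core OnS 1%nat 3%nat. unfold eta; simpl; ring. }
  assert (K6 : forall a b, U a b -> inner5 (Qf a b) (N1 a b) = 0).
  { intros a' b' H'. rewrite eQf, ip_scal_l. onrw_core OnS 2%nat 3%nat. unfold eta; simpl; ring. }
  assert (K7 : forall a b, U a b -> inner5 (Pf a b) (N2 a b) = 0).
  { intros a' b' H'. rewrite ePf, ip_scal_l. onrw_core OnS 1%nat 4%nat. unfold eta; simpl; ring. }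
  assert (K8 : forall a b, U a b -> inner5 (Qf a b) (N2 a b) = 0).
  { intros a' b' H'. rewrite eQf, ip_scal_l. onrw_core OnS 2%nat 4%nat. unfold eta; simpl; ring. }
  assert (K9 : forall a b, U a b -> inner5 (f a b) (N1 a b) = 0).
  { intros a' b' H'. onrw_core OnS 0%nat 3%nat. unfold eta; simpl; ring. }
  assert (K10 : forall a b, U a b -> inner5 (f a b) (N2 a b) = 0).
  { intros a' b' H'. onrw_core OnS 0%nat 4%nat. unfold eta; simpl; ring. }
  assert (K11 : forall a b, U a b -> inner5 (N1 a b) (N1 a b) = 1).
  { intros a' b' H'. onrw_core OnS 3%nat 3%nat. unfold eta; simpl; ring. }
  assert (K12 : forall a b, U a b -> inner5 (N2 a b) (N2 a b) = -1).
  { intros a' b' H'. onrw_core OnS 4%nat 4%nat. unfold eta; simpl; ring. }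
  assert (K13 : forall a b, U a b -> inner5 (N1 a b) (N2 a b) = 0).
  { intros a' b' H'. onrw_core OnS 3%nat 4%nat. unfold eta; simpl; ring. }
  assert (G1x : Dx (fun _ _ => 1) a b 0) by (unfold Dx; apply dpl_const).
  assert (G1y : Dy (fun _ _ => 1) a b 0) by (unfold Dy; apply dpl_const).
  assert (Gmx : Dx (fun _ _ => -1) a b 0) by (unfold Dx; apply dpl_const).
  assert (Gmy : Dy (fun _ _ => -1) a b 0) by (unfold Dy; apply dpl_const).
  pose proof (DipX U f Pf _ _ _ a b _ HU Hab Hfx HxPf K0 G0) as R1.
  pose proof (DipY U f Pf _ _ _ a b _ HU Hab Hfy HPxy1 K0 G0') as R2.
  pose proof (DipY U f Qf _ _ _ a b _ HU Hab Hfy HQyy K1 G0') as R3.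
  pose proof (DipX U Pf Pf _ _ _ a b _ HU Hab HxPf HxPf K2 G4x) as R4.
  pose proof (DipY U Pf Pf _ _ _ a b _ HU Hab HPxy1 HPxy1 K2 G4y) as R5.
  pose proof (DipX U Qf Qf _ _ _ a b _ HU Hab HPxy2 HPxy2 K3 G4x) as R6.
  pose proof (DipY U Qf Qf _ _ _ a b _ HU Hab HQyy HQyy K3 G4y) as R7.
  pose proof (DipX U Pf Qf _ _ _ a b _ HU Hab HxPf HPxy2 K4 G0) as R8.
  pose proof (DipY U Pf Qf _ _ _ a b _ HU Hab HPxy1 HQyy K4 G0') as R9.
  pose proof (DipX U Pf N1 _ _ _ a b _ HU Hab HxPf HN1x K5 G0) as R10.
  pose proof (DipY U Pf N1 _ _ _ a b _ HU Hab HPxy1 HN1y K5 G0') as R11.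
  pose proof (DipX U Qf N1 _ _ _ a b _ HU Hab HPxy2 HN1x K6 G0) as R12.
  pose proof (DipY U Qf N1 _ _ _ a b _ HU Hab HQyy HN1y K6 G0') as R13.
  pose proof (DipX U Pf N2 _ _ _ a b _ HU Hab HxPf HN2x K7 G0) as R14.
  pose proof (DipY U Pf N2 _ _ _ a b _ HU Hab HPxy1 HN2y K7 G0') as R15.
  pose proof (DipX U Qf N2 _ _ _ a b _ HU Hab HPxy2 HN2x K8 G0) as R16.
  pose proof (DipY U Qf N2 _ _ _ a b _ HU Hab HQyy HN2y K8 G0') as R17.
  pose proof (DipX U f N1 _ _ _ a b _ HU Hab Hfx HN1x K9 G0) as R18.
  pose proof (DipY U f N1 _ _ _ a b _ HU Hab Hfy HN1y K9 G0') as R19.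
  pose proof (DipX U f N2 _ _ _ a b _ HU Hab Hfx HN2x K10 G0) as R20.
  pose proof (DipY U f N2 _ _ _ a b _ HU Hab Hfy HN2y K10 G0') as R21.
  pose proof (DipX U N1 N1 _ _ _ a b _ HU Hab HN1x HN1x K11 G1x) as R22.
  pose proof (DipY U N1 N1 _ _ _ a b _ HU Hab HN1y HN1y K11 G1y) as R23.
  pose proof (DipX U N2 N2 _ _ _ a b _ HU Hab HN2x HN2x K12 Gmx) as R24.
  pose proof (DipY U N2 N2 _ _ _ a b _ HU Hab HN2y HN2y K12 Gmy) as R25.
  pose proof (DipX U N1 N2 _ _ _ a b _ HU Hab HN1x HN2x K13 G0) as R26.
  pose proof (DipY U N1 N2 _ _ _ a b _ HU Hab HN1y HN2y K13 G0') as R27.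

  assert (Par := Hpar a b Hab (fun i => mkC ((N1x i + 0) / 2) ((0 - N1y i) / 2))).
  assert (Par' : cinner (fun i => mkC ((N1x i + 0) / 2) ((0 - N1y i) / 2)) (VtoC (N2 a b)) = C0).
  { apply Par. intros i Hi. exists (N1x i), (N1y i), 0, 0.
    repeat split; try (apply HN1x; auto); try (apply HN1y; auto); unfold Dx, Dy; simpl; apply dpl_const. }
  clear Par.
  assert (Par1 := f_equal cre Par'). assert (Par2 := f_equal cim Par'). clear Par'.
  simpl in Par1, Par2; unfold eta in Par1, Par2; simpl in Par1, Par2.
  assert (P1 : inner5 (N2 a b) N1x = 0) by (unfold inner5, sum5, eta; simpl; lra).
  assert (P2 : inner5 (N2 a b) N1y = 0) by (unfold inner5, sum5, eta; simpl; lra).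
  clear Par1 Par2.
  assert (Cfz : forall i, (i < 5)%nat -> forall a b, U a b -> cre (fz a b i) = Pf a b i / 2 /\ cim (fz a b i) = - (Qf a b i / 2)).
  { intros i Hi a' b' H'. rewrite HF12 by auto. unfold Cscal, Pf, Qf, Ef; simpl. split; field; apply Rgt_not_eq, sqrt2_pos. }
  assert (Dfz : forall i, (i < 5)%nat ->
     Dx (fun a b => cre (fz a b i)) a b (Pxx i / 2) /\ Dy (fun a b => cre (fz a b i)) a b (Pxy i / 2) /\
     Dx (fun a b => cim (fz a b i)) a b (- Pxy i / 2) /\ Dy (fun a b => cim (fz a b i)) a b (- Qyy i / 2)).
  { intros i Hi. pose proof (HxPf i Hi). pose proof (HPxy1 i Hi). pose proof (HPxy2 i Hi). pose proof (HQyy i Hi).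
    repeat split.
    - apply (Dx_ext U (fun a b => Pf a b i / 2)); auto. intros; symmetry; apply Cfz; auto.
      unfold Dx in *; eapply dpl_eq; [dtac|cbv beta; field].
    - apply (Dy_ext U (fun a b => Pf a b i / 2)); auto. intros; symmetry; apply Cfz; auto.
      unfold Dy in *; eapply dpl_eq; [dtac|cbv beta; field].
    - apply (Dx_ext U (fun a b => - (Qf a b i / 2))); auto. intros; symmetry; apply Cfz; auto.
      unfold Dx in *; eapply dpl_eq; [dtac|cbv beta; field].
    - apply (Dy_ext U (fun a b => - (Qf a b i / 2))); auto. intros; symmetry; apply Cfz; auto.
      unfold Dy in *; eapply dpl_eq; [dtac|cbv beta; field]. }
  assert (Xi := Hxi a b Hab (fun i => mkC ((Pxx i / 2 + - Qyy i / 2) / 2) ((- Pxy i / 2 - Pxy i / 2) / 2))).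
  destruct Xi as [Xi1 Xi2].
  { intros i Hi. exists (Pxx i / 2), (Pxy i / 2), (- Pxy i / 2), (- Qyy i / 2).
    destruct (Dfz i Hi) as [? [? [? ?]]]. repeat split; auto. }
  assert (Zb := Hzzb a b Hab (fun i => mkC ((Pxx i / 2 - - Qyy i / 2) / 2) ((- Pxy i / 2 + Pxy i / 2) / 2))).
  assert (Zb' : forall i, (i < 5)%nat -> (Pxx i / 2 - - Qyy i / 2) / 2 =
      exp (2 * u a b) * (- f a b i + h a b * (N1 a b i + N2 a b i))).
  { intros i Hi. refine (f_equal cre (Zb _ i Hi)).
    intros i' Hi'. exists (Pxx i' / 2), (Pxy i' / 2), (- Pxy i' / 2), (- Qyy i' / 2).
    destruct (Dfz i' Hi') as [? [? [? ?]]]. repeat split; auto. }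
  clear Zb.
  assert (X1 := f_equal cre Xi1). assert (X2 := f_equal cim Xi1).
  assert (X3 := f_equal cre Xi2). assert (X4 := f_equal cim Xi2). clear Xi1 Xi2.
  simpl in X1, X2, X3, X4; unfold eta in X1, X2, X3, X4; simpl in X1, X2, X3, X4.
  assert (xr1 : inner5 (N1 a b) Pxx - inner5 (N1 a b) Qyy = 4 * (cre (xi a b) + c)) by (unfold inner5, sum5, eta; simpl; lra).
  assert (xi1 : inner5 (N1 a b) Pxy = - 2 * cim (xi a b)) by (unfold inner5, sum5, eta; simpl; lra).
  assert (xr2 : inner5 (N2 a b) Pxx - inner5 (N2 a b) Qyy = - 4 * cre (xi a b)) by (unfold inner5, sum5, eta; simpl; lra).
  assert (xi2 : inner5 (N2 a b) Pxy = 2 * cim (xi a b)) by (unfold inner5, sum5, eta; simpl; lra).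
  clear X1 X2 X3 X4.
  assert (Hexp2 : exp (2 * u a b) = 2 * E * E).
  { unfold E, Ef. replace (2 * u a b) with (u a b + u a b) by ring. rewrite exp_plus.
    pose proof sqrt2_pos. field_simplify_eq; [s2red|lra]. }
  assert (zb1 : inner5 (N1 a b) Pxx + inner5 (N1 a b) Qyy = 8 * E * E * h a b).
  { transitivity (inner5 (fun i => Pxx i + Qyy i) (N1 a b)); [unfold inner5, sum5; ring|].
    rewrite (ip_ext_l _ (fun i => 4 * exp (2 * u a b) * (- f a b i + h a b * (N1 a b i + N2 a b i))))
      by (intros i Hi; rewrite Rmult_assoc, <- Zb' by auto; field).
    transitivity (4 * exp (2 * u a b) * (- inner5 (N1 a b) (f a b) + h a b * inner5 (N1 a b) (N1 a b) + h a b * inner5 (N1 a b) (N2 a b))).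
    + unfold inner5, sum5; ring.
    + rewrite o30, o33, o34, Hexp2. ring. }
  assert (zb2 : inner5 (N2 a b) Pxx + inner5 (N2 a b) Qyy = - 8 * E * E * h a b).
  { transitivity (inner5 (fun i => Pxx i + Qyy i) (N2 a b)); [unfold inner5, sum5; ring|].
    rewrite (ip_ext_l _ (fun i => 4 * exp (2 * u a b) * (- f a b i + h a b * (N1 a b i + N2 a b i))))
      by (intros i Hi; rewrite Rmult_assoc, <- Zb' by auto; field).
    transitivity (4 * exp (2 * u a b) * (- inner5 (N2 a b) (f a b) + h a b * inner5 (N2 a b) (N1 a b) + h a b * inner5 (N2 a b) (N2 a b))).
    + unfold inner5, sum5; ring.
    + rewrite o40, o44, (ip_sym (N2 a b) (N1 a b)), o34, Hexp2. ring. }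

  assert (o21 : inner5 (F2 a b) (F1 a b) = 0) by (rewrite ip_sym; auto).
  assert (o13 : inner5 (F1 a b) (N1 a b) = 0) by (rewrite ip_sym; auto).
  assert (o23 : inner5 (F2 a b) (N1 a b) = 0) by (rewrite ip_sym; auto).
  assert (o14 : inner5 (F1 a b) (N2 a b) = 0) by (rewrite ip_sym; auto).
  assert (o24 : inner5 (F2 a b) (N2 a b) = 0) by (rewrite ip_sym; auto).
  rewrite ?ePf, ?eQf, ?ip_scal_l, ?ip_scal_r in R1.
  rewrite ?(ip_sym Pxx), ?(ip_sym Pxy), ?(ip_sym Qyy), ?(ip_sym N1x), ?(ip_sym N1y), ?(ip_sym N2x), ?(ip_sym N2y) in R1.
  rewrite ?o11, ?o22, ?o12, ?o21, ?o13, ?o23, ?o14, ?o24 in R1.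
  rewrite ?ePf, ?eQf, ?ip_scal_l, ?ip_scal_r in R2.
  rewrite ?(ip_sym Pxx), ?(ip_sym Pxy), ?(ip_sym Qyy), ?(ip_sym N1x), ?(ip_sym N1y), ?(ip_sym N2x), ?(ip_sym N2y) in R2.
  rewrite ?o11, ?o22, ?o12, ?o21, ?o13, ?o23, ?o14, ?o24 in R2.
  rewrite ?ePf, ?eQf, ?ip_scal_l, ?ip_scal_r in R3.
  rewrite ?(ip_sym Pxx), ?(ip_sym Pxy), ?(ip_sym Qyy), ?(ip_sym N1x), ?(ip_sym N1y), ?(ip_sym N2x), ?(ip_sym N2y) in R3.
  rewrite ?o11, ?o22, ?o12, ?o21, ?o13, ?o23, ?o14, ?o24 in R3.
  rewrite ?ePf, ?eQf, ?ip_scal_l, ?ip_scal_r in R4.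
  rewrite ?(ip_sym Pxx), ?(ip_sym Pxy), ?(ip_sym Qyy), ?(ip_sym N1x), ?(ip_sym N1y), ?(ip_sym N2x), ?(ip_sym N2y) in R4.
  rewrite ?o11, ?o22, ?o12, ?o21, ?o13, ?o23, ?o14, ?o24 in R4.
  rewrite ?ePf, ?eQf, ?ip_scal_l, ?ip_scal_r in R5.
  rewrite ?(ip_sym Pxx), ?(ip_sym Pxy), ?(ip_sym Qyy), ?(ip_sym N1x), ?(ip_sym N1y), ?(ip_sym N2x), ?(ip_sym N2y) in R5.
  rewrite ?o11, ?o22, ?o12, ?o21, ?o13, ?o23, ?o14, ?o24 in R5.
  rewrite ?ePf, ?eQf, ?ip_scal_l, ?ip_scal_r in R6.
  rewrite ?(ip_sym Pxx), ?(ip_sym Pxy), ?(ip_sym Qyy), ?(ip_sym N1x), ?(ip_sym N1y), ?(ip_sym N2x), ?(ip_sym N2y) in R6.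
  rewrite ?o11, ?o22, ?o12, ?o21, ?o13, ?o23, ?o14, ?o24 in R6.
  rewrite ?ePf, ?eQf, ?ip_scal_l, ?ip_scal_r in R7.
  rewrite ?(ip_sym Pxx), ?(ip_sym Pxy), ?(ip_sym Qyy), ?(ip_sym N1x), ?(ip_sym N1y), ?(ip_sym N2x), ?(ip_sym N2y) in R7.
  rewrite ?o11, ?o22, ?o12, ?o21, ?o13, ?o23, ?o14, ?o24 in R7.
  rewrite ?ePf, ?eQf, ?ip_scal_l, ?ip_scal_r in R8.
  rewrite ?(ip_sym Pxx), ?(ip_sym Pxy), ?(ip_sym Qyy), ?(ip_sym N1x), ?(ip_sym N1y), ?(ip_sym N2x), ?(ip_sym N2y) in R8.
  rewrite ?o11, ?o22, ?o12, ?o21, ?o13, ?o23, ?o14, ?o24 in R8.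
  rewrite ?ePf, ?eQf, ?ip_scal_l, ?ip_scal_r in R9.
  rewrite ?(ip_sym Pxx), ?(ip_sym Pxy), ?(ip_sym Qyy), ?(ip_sym N1x), ?(ip_sym N1y), ?(ip_sym N2x), ?(ip_sym N2y) in R9.
  rewrite ?o11, ?o22, ?o12, ?o21, ?o13, ?o23, ?o14, ?o24 in R9.
  rewrite ?ePf, ?eQf, ?ip_scal_l, ?ip_scal_r in R10.
  rewrite ?(ip_sym Pxx), ?(ip_sym Pxy), ?(ip_sym Qyy), ?(ip_sym N1x), ?(ip_sym N1y), ?(ip_sym N2x), ?(ip_sym N2y) in R10.
  rewrite ?o11, ?o22, ?o12, ?o21, ?o13, ?o23, ?o14, ?o24 in R10.
  rewrite ?ePf, ?eQf, ?ip_scal_l, ?ip_scal_r in R11.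
  rewrite ?(ip_sym Pxx), ?(ip_sym Pxy), ?(ip_sym Qyy), ?(ip_sym N1x), ?(ip_sym N1y), ?(ip_sym N2x), ?(ip_sym N2y) in R11.
  rewrite ?o11, ?o22, ?o12, ?o21, ?o13, ?o23, ?o14, ?o24 in R11.
  rewrite ?ePf, ?eQf, ?ip_scal_l, ?ip_scal_r in R12.
  rewrite ?(ip_sym Pxx), ?(ip_sym Pxy), ?(ip_sym Qyy), ?(ip_sym N1x), ?(ip_sym N1y), ?(ip_sym N2x), ?(ip_sym N2y) in R12.
  rewrite ?o11, ?o22, ?o12, ?o21, ?o13, ?o23, ?o14, ?o24 in R12.
  rewrite ?ePf, ?eQf, ?ip_scal_l, ?ip_scal_r in R13.
  rewrite ?(ip_sym Pxx), ?(ip_sym Pxy), ?(ip_sym Qyy), ?(ip_sym N1x), ?(ip_sym N1y), ?(ip_sym N2x), ?(ip_sym N2y) in R13.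
  rewrite ?o11, ?o22, ?o12, ?o21, ?o13, ?o23, ?o14, ?o24 in R13.
  rewrite ?ePf, ?eQf, ?ip_scal_l, ?ip_scal_r in R14.
  rewrite ?(ip_sym Pxx), ?(ip_sym Pxy), ?(ip_sym Qyy), ?(ip_sym N1x), ?(ip_sym N1y), ?(ip_sym N2x), ?(ip_sym N2y) in R14.
  rewrite ?o11, ?o22, ?o12, ?o21, ?o13, ?o23, ?o14, ?o24 in R14.
  rewrite ?ePf, ?eQf, ?ip_scal_l, ?ip_scal_r in R15.
  rewrite ?(ip_sym Pxx), ?(ip_sym Pxy), ?(ip_sym Qyy), ?(ip_sym N1x), ?(ip_sym N1y), ?(ip_sym N2x), ?(ip_sym N2y) in R15.
  rewrite ?o11, ?o22, ?o12, ?o21, ?o13, ?o23, ?o14, ?o24 in R15.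
  rewrite ?ePf, ?eQf, ?ip_scal_l, ?ip_scal_r in R16.
  rewrite ?(ip_sym Pxx), ?(ip_sym Pxy), ?(ip_sym Qyy), ?(ip_sym N1x), ?(ip_sym N1y), ?(ip_sym N2x), ?(ip_sym N2y) in R16.
  rewrite ?o11, ?o22, ?o12, ?o21, ?o13, ?o23, ?o14, ?o24 in R16.
  rewrite ?ePf, ?eQf, ?ip_scal_l, ?ip_scal_r in R17.
  rewrite ?(ip_sym Pxx), ?(ip_sym Pxy), ?(ip_sym Qyy), ?(ip_sym N1x), ?(ip_sym N1y), ?(ip_sym N2x), ?(ip_sym N2y) in R17.
  rewrite ?o11, ?o22, ?o12, ?o21, ?o13, ?o23, ?o14, ?o24 in R17.
  rewrite ?ePf, ?eQf, ?ip_scal_l, ?ip_scal_r in R18.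
  rewrite ?(ip_sym Pxx), ?(ip_sym Pxy), ?(ip_sym Qyy), ?(ip_sym N1x), ?(ip_sym N1y), ?(ip_sym N2x), ?(ip_sym N2y) in R18.
  rewrite ?o11, ?o22, ?o12, ?o21, ?o13, ?o23, ?o14, ?o24 in R18.
  rewrite ?ePf, ?eQf, ?ip_scal_l, ?ip_scal_r in R19.
  rewrite ?(ip_sym Pxx), ?(ip_sym Pxy), ?(ip_sym Qyy), ?(ip_sym N1x), ?(ip_sym N1y), ?(ip_sym N2x), ?(ip_sym N2y) in R19.
  rewrite ?o11, ?o22, ?o12, ?o21, ?o13, ?o23, ?o14, ?o24 in R19.
  rewrite ?ePf, ?eQf, ?ip_scal_l, ?ip_scal_r in R20.
  rewrite ?(ip_sym Pxx), ?(ip_sym Pxy), ?(ip_sym Qyy), ?(ip_sym N1x), ?(ip_sym N1y), ?(ip_sym N2x), ?(ip_sym N2y) in R20.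
  rewrite ?o11, ?o22, ?o12, ?o21, ?o13, ?o23, ?o14, ?o24 in R20.
  rewrite ?ePf, ?eQf, ?ip_scal_l, ?ip_scal_r in R21.
  rewrite ?(ip_sym Pxx), ?(ip_sym Pxy), ?(ip_sym Qyy), ?(ip_sym N1x), ?(ip_sym N1y), ?(ip_sym N2x), ?(ip_sym N2y) in R21.
  rewrite ?o11, ?o22, ?o12, ?o21, ?o13, ?o23, ?o14, ?o24 in R21.
  rewrite ?ePf, ?eQf, ?ip_scal_l, ?ip_scal_r in R22.
  rewrite ?(ip_sym Pxx), ?(ip_sym Pxy), ?(ip_sym Qyy), ?(ip_sym N1x), ?(ip_sym N1y), ?(ip_sym N2x), ?(ip_sym N2y) in R22.
  rewrite ?o11, ?o22, ?o12, ?o21, ?o13, ?o23, ?o14, ?o24 in R22.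
  rewrite ?ePf, ?eQf, ?ip_scal_l, ?ip_scal_r in R23.
  rewrite ?(ip_sym Pxx), ?(ip_sym Pxy), ?(ip_sym Qyy), ?(ip_sym N1x), ?(ip_sym N1y), ?(ip_sym N2x), ?(ip_sym N2y) in R23.
  rewrite ?o11, ?o22, ?o12, ?o21, ?o13, ?o23, ?o14, ?o24 in R23.
  rewrite ?ePf, ?eQf, ?ip_scal_l, ?ip_scal_r in R24.
  rewrite ?(ip_sym Pxx), ?(ip_sym Pxy), ?(ip_sym Qyy), ?(ip_sym N1x), ?(ip_sym N1y), ?(ip_sym N2x), ?(ip_sym N2y) in R24.
  rewrite ?o11, ?o22, ?o12, ?o21, ?o13, ?o23, ?o14, ?o24 in R24.
  rewrite ?ePf, ?eQf, ?ip_scal_l, ?ip_scal_r in R25.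
  rewrite ?(ip_sym Pxx), ?(ip_sym Pxy), ?(ip_sym Qyy), ?(ip_sym N1x), ?(ip_sym N1y), ?(ip_sym N2x), ?(ip_sym N2y) in R25.
  rewrite ?o11, ?o22, ?o12, ?o21, ?o13, ?o23, ?o14, ?o24 in R25.
  rewrite ?ePf, ?eQf, ?ip_scal_l, ?ip_scal_r in R26.
  rewrite ?(ip_sym Pxx), ?(ip_sym Pxy), ?(ip_sym Qyy), ?(ip_sym N1x), ?(ip_sym N1y), ?(ip_sym N2x), ?(ip_sym N2y) in R26.
  rewrite ?o11, ?o22, ?o12, ?o21, ?o13, ?o23, ?o14, ?o24 in R26.
  rewrite ?ePf, ?eQf, ?ip_scal_l, ?ip_scal_r in R27.
  rewrite ?(ip_sym Pxx), ?(ip_sym Pxy), ?(ip_sym Qyy), ?(ip_sym N1x), ?(ip_sym N1y), ?(ip_sym N2x), ?(ip_sym N2y) in R27.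
  rewrite ?o11, ?o22, ?o12, ?o21, ?o13, ?o23, ?o14, ?o24 in R27.
  try change (Ef a b) with E in R1.
  try change (Ef a b) with E in R2.
  try change (Ef a b) with E in R3.
  try change (Ef a b) with E in R4.
  try change (Ef a b) with E in R5.
  try change (Ef a b) with E in R6.
  try change (Ef a b) with E in R7.
  try change (Ef a b) with E in R8.
  try change (Ef a b) with E in R9.
  try change (Ef a b) with E in R10.
  try change (Ef a b) with E in R11.
  try change (Ef a b) with E in R12.
  try change (Ef a b) with E in R13.
  try change (Ef a b) with E in R14.
  try change (Ef a b) with E in R15.
  try change (Ef a b) with E in R16.
  try change (Ef a b) with E in R17.
  try change (Ef a b) with E in R18.
  try change (Ef a b) with E in R19.
  try change (Ef a b) with E in R20.
  try change (Ef a b) with E in R21.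
  try change (Ef a b) with E in R22.
  try change (Ef a b) with E in R23.
  try change (Ef a b) with E in R24.
  try change (Ef a b) with E in R25.
  try change (Ef a b) with E in R26.
  try change (Ef a b) with E in R27.
  assert (a01 : inner5 (f a b) Pxx = - 4 * E * E) by lra.
  assert (a02 : inner5 (f a b) Pxy = 0) by lra.
  assert (a03 : inner5 (f a b) Qyy = - 4 * E * E) by lra.
  assert (a11 : inner5 (F1 a b) Pxx = 2 * E * ux a b) by nra.
  assert (a12 : inner5 (F1 a b) Pxy = 2 * E * uy a b) by nra.
  assert (a22 : inner5 (F2 a b) Pxy = 2 * E * ux a b) by nra.
  assert (a23 : inner5 (F2 a b) Qyy = 2 * E * uy a b) by nra.
  assert (a21 : inner5 (F2 a b) Pxx = - 2 * E * uy a b) by nra.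
  assert (a13 : inner5 (F1 a b) Qyy = - 2 * E * ux a b) by nra.
  assert (b1 : inner5 (N1 a b) Pxx = 2 * (cre (xi a b) + c) + 4 * E * E * h a b) by lra.
  assert (b2 : inner5 (N1 a b) Qyy = 4 * E * E * h a b - 2 * (cre (xi a b) + c)) by lra.
  assert (b3 : inner5 (N2 a b) Pxx = - 2 * cre (xi a b) - 4 * E * E * h a b) by lra.
  assert (b4 : inner5 (N2 a b) Qyy = 2 * cre (xi a b) - 4 * E * E * h a b) by lra.
  assert (c1 : inner5 (f a b) N1x = 0) by lra.
  assert (c2 : inner5 (f a b) N1y = 0) by lra.
  assert (c3 : inner5 (f a b) N2x = 0) by lra.
  assert (c4 : inner5 (f a b) N2y = 0) by lra.
  assert (d1 : inner5 (F1 a b) N1x = - inner5 (N1 a b) Pxx / (2 * E)) by (field_simplify_eq; lra).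
  assert (d2 : inner5 (F1 a b) N1y = - inner5 (N1 a b) Pxy / (2 * E)) by (field_simplify_eq; lra).
  assert (d3 : inner5 (F2 a b) N1x = - inner5 (N1 a b) Pxy / (2 * E)) by (field_simplify_eq; lra).
  assert (d4 : inner5 (F2 a b) N1y = - inner5 (N1 a b) Qyy / (2 * E)) by (field_simplify_eq; lra).
  assert (d5 : inner5 (F1 a b) N2x = - inner5 (N2 a b) Pxx / (2 * E)) by (field_simplify_eq; lra).
  assert (d6 : inner5 (F1 a b) N2y = - inner5 (N2 a b) Pxy / (2 * E)) by (field_simplify_eq; lra).
  assert (d7 : inner5 (F2 a b) N2x = - inner5 (N2 a b) Pxy / (2 * E)) by (field_simplify_eq; lra).
  assert (d8 : inner5 (F2 a b) N2y = - inner5 (N2 a b) Qyy / (2 * E)) by (field_simplify_eq; lra).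
  assert (e1 : inner5 (N1 a b) N1x = 0) by lra.
  assert (e2 : inner5 (N1 a b) N1y = 0) by lra.
  assert (e3 : inner5 (N2 a b) N2x = 0) by lra.
  assert (e4 : inner5 (N2 a b) N2y = 0) by lra.
  assert (e5 : inner5 (N1 a b) N2x = 0) by lra.
  assert (e6 : inner5 (N1 a b) N2y = 0) by lra.
  rewrite ?b1, ?b2, ?b3, ?b4, ?xi1, ?xi2 in d1.
  rewrite ?b1, ?b2, ?b3, ?b4, ?xi1, ?xi2 in d2.
  rewrite ?b1, ?b2, ?b3, ?b4, ?xi1, ?xi2 in d3.
  rewrite ?b1, ?b2, ?b3, ?b4, ?xi1, ?xi2 in d4.
  rewrite ?b1, ?b2, ?b3, ?b4, ?xi1, ?xi2 in d5.
  rewrite ?b1, ?b2, ?b3, ?b4, ?xi1, ?xi2 in d6.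
  rewrite ?b1, ?b2, ?b3, ?b4, ?xi1, ?xi2 in d7.
  rewrite ?b1, ?b2, ?b3, ?b4, ?xi1, ?xi2 in d8.
  assert (Hon' : forall i j, (i < 5)%nat -> (j < 5)%nat ->
     sum5 (fun k => eta k * Fmat f F1 F2 N1 N2 a b k i * Fmat f F1 F2 N1 N2 a b k j) =
     (if Nat.eqb i j then eta i else 0)) by exact Hon.
  assert (HF1x : forall i, (i < 5)%nat -> Dx (fun a b => F1 a b i) a b (vlin (phi a b) Pxx (- ux a b * phi a b) (Pf a b) i)).
  { intros i Hi. apply (Dx_ext U (fun a b => Pf a b i * phi a b)); auto. intros; symmetry; apply F1_Pf.
    pose proof (HxPf i Hi). unfold Dx, vlin in *. eapply dpl_eq; [dtac|cbv beta; ring]. }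
  assert (HF1y : forall i, (i < 5)%nat -> Dy (fun a b => F1 a b i) a b (vlin (phi a b) Pxy (- uy a b * phi a b) (Pf a b) i)).
  { intros i Hi. apply (Dy_ext U (fun a b => Pf a b i * phi a b)); auto. intros; symmetry; apply F1_Pf.
    pose proof (HPxy1 i Hi). unfold Dy, vlin in *. eapply dpl_eq; [dtac|cbv beta; ring]. }
  assert (HF2x : forall i, (i < 5)%nat -> Dx (fun a b => F2 a b i) a b (vlin (phi a b) Pxy (- ux a b * phi a b) (Qf a b) i)).
  { intros i Hi. apply (Dx_ext U (fun a b => Qf a b i * phi a b)); auto. intros; symmetry; apply F2_Qf.
    pose proof (HPxy2 i Hi). unfold Dx, vlin in *. eapply dpl_eq; [dtac|cbv beta; ring]. }
  assert (HF2y : forall i, (i < 5)%nat -> Dy (fun a b => F2 a b i) a b (vlin (phi a b) Qyy (- uy a b * phi a b) (Qf a b) i)).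
  { intros i Hi. apply (Dy_ext U (fun a b => Qf a b i * phi a b)); auto. intros; symmetry; apply F2_Qf.
    pose proof (HQyy i Hi). unfold Dy, vlin in *. eapply dpl_eq; [dtac|cbv beta; ring]. }
  assert (Hs := sqrt2_pos). assert (He := exp_pos (u a b)).
  intros i j Hi Hj. revert j Hj. apply lt5; split.
  all: match goal with
       | |- Dx (fun a b => Fmat _ _ _ _ _ a b _ ?j) _ _ _ =>
         let D := match j with 0%nat => constr:(Pf a b) | 1%nat => constr:(vlin (phi a b) Pxx (- ux a b * phi a b) (Pf a b))
                   | 2%nat => constr:(vlin (phi a b) Pxy (- ux a b * phi a b) (Qf a b)) | 3%nat => constr:(N1x) | _ => constr:(N2x) end in
         apply (Dx_eq _ _ _ (D i)); [|apply (finish_col (Fmat f F1 F2 N1 N2 a b) (fun k => alpha_x (Afield 0 c u h uz xi a b) k j) D Hon'); [|exact Hi]]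
       | |- Dy (fun a b => Fmat _ _ _ _ _ a b _ ?j) _ _ _ =>
         let D := match j with 0%nat => constr:(Qf a b) | 1%nat => constr:(vlin (phi a b) Pxy (- uy a b * phi a b) (Pf a b))
                   | 2%nat => constr:(vlin (phi a b) Qyy (- uy a b * phi a b) (Qf a b)) | 3%nat => constr:(N1y) | _ => constr:(N2y) end in
         apply (Dy_eq _ _ _ (D i)); [|apply (finish_col (Fmat f F1 F2 N1 N2 a b) (fun k => alpha_y (Afield 0 c u h uz xi a b) k j) D Hon'); [|exact Hi]]
       end.
  all: try (cbn [Fmat]; auto; fail).
  all: intros k Hk; revert k Hk; apply lt5.
  all: unfold alpha_x, alpha_y, Afield, Amat; rewrite ?Euz; cbn [cre cim Cscal Cadd Csub Copp Cmul RtoC Ci C0].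
  all: try change (fun m => Fmat f F1 F2 N1 N2 a b m 0%nat) with (f a b);
       try change (fun m => Fmat f F1 F2 N1 N2 a b m 1%nat) with (F1 a b);
       try change (fun m => Fmat f F1 F2 N1 N2 a b m 2%nat) with (F2 a b);
       try change (fun m => Fmat f F1 F2 N1 N2 a b m 3%nat) with (N1 a b);
       try change (fun m => Fmat f F1 F2 N1 N2 a b m 4%nat) with (N2 a b).
  all: rewrite ?ip_lin_r, ?ePf, ?eQf, ?ip_scal_r.
  all: rewrite ?o11, ?o22, ?o12, ?o21, ?o13, ?o23, ?o14, ?o24, ?o01, ?o02, ?o33, ?o44, ?o34, ?o31, ?o32, ?o41, ?o42, ?o30, ?o40.
  all: rewrite ?a01, ?a02, ?a03, ?a11, ?a12, ?a22, ?a23, ?a21, ?a13, ?b1, ?b2, ?b3, ?b4, ?xi1, ?xi2,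
         ?c1, ?c2, ?c3, ?c4, ?d1, ?d2, ?d3, ?d4, ?d5, ?d6, ?d7, ?d8, ?e1, ?e2, ?e3, ?e4, ?e5, ?e6, ?P1, ?P2.
  all: unfold eta; simpl Nat.eqb; cbv iota.
  all: unfold phi; rewrite ?exp_Ropp; unfold E, Ef.
  all: field_simplify_eq; try s2red; repeat split; try (apply Rgt_not_eq; assumption); try exact Hc.

Qed.
End WithU.
End Geo.


Lemma vec5g {T : Type} (d : T) (P : nat -> T -> Prop) : (forall i, (i < 5)%nat -> exists l, P i l) ->
  exists v : nat -> T, forall i, (i < 5)%nat -> P i (v i).
Proof.
  intros H.
  destruct (H 0%nat ltac:(lia)) as [l0 H0]. destruct (H 1%nat ltac:(lia)) as [l1 H1].
  destruct (H 2%nat ltac:(lia)) as [l2 H2]. destruct (H 3%nat ltac:(lia)) as [l3 H3].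
  destruct (H 4%nat ltac:(lia)) as [l4 H4].
  exists (fun i => match i with 0 => l0 | 1 => l1 | 2 => l2 | 3 => l3 | _ => l4 end)%nat.
  intros i Hi. do 5 (destruct i as [|i]; auto). lia.
Qed.

Lemma vec25 {T : Type} (d : T) (P : nat -> nat -> T -> Prop) :
  (forall i j, (i < 5)%nat -> (j < 5)%nat -> exists l, P i j l) ->
  exists v : nat -> nat -> T, forall i j, (i < 5)%nat -> (j < 5)%nat -> P i j (v i j).
Proof.
  intros H.
  destruct (vec5g (fun _ => d) (fun i g => forall j, (j < 5)%nat -> P i j (g j))) as [v Hv].
  - intros i Hi. apply (vec5g d). intros j Hj. apply H; auto.
  - exists v. intros; apply Hv; auto.
Qed.

Lemma so41_x t c u h uz xi : is_so41 (alpha_x (Amat t c u h uz xi)).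
Proof.
  intros i j Hi Hj. revert i Hi. apply lt5; revert j Hj; apply lt5;
  unfold alpha_x, Amat; cbn [cre cim Cscal Cadd Csub Copp Cmul RtoC Ci C0]; unfold eta; simpl; ring.
Qed.
Lemma so41_y t c u h uz xi : is_so41 (alpha_y (Amat t c u h uz xi)).
Proof.
  intros i j Hi Hj. revert i Hi. apply lt5; revert j Hj; apply lt5;
  unfold alpha_y, Amat; cbn [cre cim Cscal Cadd Csub Copp Cmul RtoC Ci C0]; unfold eta; simpl; ring.
Qed.

Definition Mre (k j : nat) : R :=
  match k, j with 1%nat, 3%nat => -1 | 1%nat, 4%nat => 1 | 3%nat, 1%nat => 1 | 4%nat, 1%nat => 1 | _, _ => 0 end.
Definition Mim (k j : nat) : R :=
  match k, j with 2%nat, 3%nat => 1 | 2%nat, 4%nat => -1 | 3%nat, 2%nat => -1 | 4%nat, 2%nat => -1 | _, _ => 0 end.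

Lemma Adecomp t c u h uz xi k j : (k < 5)%nat -> (j < 5)%nat ->
  cre (Amat t c u h uz xi k j) = cre (Amat 0 c u h uz xi k j) + t / (2 * c) * (exp u / sqrt 2) * Mre k j /\
  cim (Amat t c u h uz xi k j) = cim (Amat 0 c u h uz xi k j) + t / (2 * c) * (exp u / sqrt 2) * Mim k j.
Proof.
  intros Hk Hj. revert k Hk. apply lt5; revert j Hj; apply lt5;
  unfold Amat, Mre, Mim; cbn [cre cim Cscal Cadd Csub Copp Cmul RtoC Ci C0]; split; unfold Rdiv; ring.
Qed.
Section Fin.
Variables (U : R -> R -> Prop)
  (f F1 F2 N1 N2 : R -> R -> VR) (u h : R -> R -> R) (xi : R -> R -> Cx) (c : R)
  (fz : R -> R -> VC) (uz : R -> R -> Cx).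
Hypothesis HU : openU U.
Hypothesis Hreg : forall i, (i < 5)%nat ->
     smooth U (fun x y => f x y i) /\ smooth U (fun x y => N1 x y i) /\
     smooth U (fun x y => N2 x y i).
Hypothesis Hu : smooth U u.
Hypothesis Hh : smooth U h.
Hypothesis Hxr : smooth U (fun x y => cre (xi x y)).
Hypothesis Hxim : smooth U (fun x y => cim (xi x y)).
Hypothesis Hsph : forall x y, U x y -> inner5 (f x y) (f x y) = 1.
Hypothesis Hfz : forall x y, U x y -> HasDzV f x y (fz x y).
Hypothesis HF12 : forall x y, U x y -> forall i, (i < 5)%nat ->
     fz x y i = Cscal (exp (u x y) / sqrt 2) (mkC (F1 x y i) (- F2 x y i)).
Hypothesis Hnorm : forall x y, U x y ->
     inner5 (N1 x y) (N1 x y) = 1 /\ inner5 (N2 x y) (N2 x y) = -1 /\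
     inner5 (N1 x y) (N2 x y) = 0 /\
     inner5 (N1 x y) (f x y) = 0 /\ inner5 (N2 x y) (f x y) = 0 /\
     inner5 (N1 x y) (F1 x y) = 0 /\ inner5 (N1 x y) (F2 x y) = 0 /\
     inner5 (N2 x y) (F1 x y) = 0 /\ inner5 (N2 x y) (F2 x y) = 0 /\
     - N2 x y 4%nat < 0.
Hypothesis HSO : forall x y, U x y -> SOp41 (Fmat f F1 F2 N1 N2 x y).
Hypothesis Hpar : forall x y, U x y -> forall w, HasDzV N1 x y w -> cinner w (VtoC (N2 x y)) = C0.
Hypothesis Hc : c <> 0.
Hypothesis Hxi : forall x y, U x y -> forall w, HasDzCV fz x y w ->
     cinner w (VtoC (N1 x y)) = Cadd (xi x y) (RtoC c) /\
     Copp (cinner w (VtoC (N2 x y))) = xi x y.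
Hypothesis Hzzb : forall x y, U x y -> forall w, HasDzbCV fz x y w -> forall i, (i < 5)%nat ->
     w i = RtoC (exp (2 * u x y) * (- f x y i + h x y * (N1 x y i + N2 x y i))).
Hypothesis Huz : forall x y, U x y -> HasDz (fun a b => RtoC (u a b)) x y (uz x y).

Lemma u_data : exists ux uy uxy, S2 U u ux uy uxy /\ Ck 2 U ux /\ Ck 2 U uy.
Proof. exact (schwarz_gen 1 U u HU (Hu 3%nat)). Qed.

Section WithU2.
Variables (ux uy uxy : R -> R -> R).
Hypothesis HuS : S2 U u ux uy uxy.
Hypothesis Hux2 : Ck 2 U ux.
Hypothesis Huy2 : Ck 2 U uy.

Lemma uz_form a b : U a b -> uz a b = mkC (ux a b / 2) (- uy a b / 2).
Proof.
  intros Hab. destruct (HuS a b Hab) as [Hux [Huy _]].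
  destruct (Huz a b Hab) as [ax [ay [bx [bY [H1 [H2 [H3 [H4 E]]]]]]]]. simpl in H3, H4.
  assert (bx = 0) by (apply (Dx_uniq (fun _ _ => 0) a b); auto; unfold Dx; apply dpl_const).
  assert (bY = 0) by (apply (Dy_uniq (fun _ _ => 0) a b); auto; unfold Dy; apply dpl_const).
  assert (ax = ux a b) by (apply (Dx_uniq u a b); auto).
  assert (ay = uy a b) by (apply (Dy_uniq u a b); auto).
  subst. rewrite E. f_equal; lra.
Qed.

Lemma A0_deriv x y : U x y -> forall k j, (k < 5)%nat -> (j < 5)%nat ->
  exists l : R * R * R * R, let '(Rx, Ry, Ix, Iy) := l in
    Dx (fun a b => cre (Afield 0 c u h uz xi a b k j)) x y Rx /\
    Dy (fun a b => cre (Afield 0 c u h uz xi a b k j)) x y Ry /\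
    Dx (fun a b => cim (Afield 0 c u h uz xi a b k j)) x y Ix /\
    Dy (fun a b => cim (Afield 0 c u h uz xi a b k j)) x y Iy.
Proof.
  intros Hp.
  destruct (HuS x y Hp) as [du1 [du2 _]].
  destruct (Ck_partials 0 U h (Hh 1%nat) x y Hp) as [hx [hy [dh1 dh2]]].
  destruct (Ck_partials 0 U _ (Hxr 1%nat) x y Hp) as [rx [ry [dr1 dr2]]].
  destruct (Ck_partials 0 U _ (Hxim 1%nat) x y Hp) as [ix [iy [di1 di2]]].
  destruct (Ck_partials 1 U ux Hux2 x y Hp) as [uxx [uxy' [dux1 dux2]]].
  destruct (Ck_partials 1 U uy Huy2 x y Hp) as [uyx [uyy [duy1 duy2]]].
  assert (dz1 : Dx (fun a b => cre (uz a b)) x y (uxx / 2)).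
  { apply (Dx_ext U (fun a b => ux a b / 2)); auto. intros a b Hab; rewrite uz_form; auto.
    unfold Dx in *; eapply dpl_eq; [dtac|cbv beta; field]. }
  assert (dz2 : Dy (fun a b => cre (uz a b)) x y (uxy' / 2)).
  { apply (Dy_ext U (fun a b => ux a b / 2)); auto. intros a b Hab; rewrite uz_form; auto.
    unfold Dy in *; eapply dpl_eq; [dtac|cbv beta; field]. }
  assert (dz3 : Dx (fun a b => cim (uz a b)) x y (- uyx / 2)).
  { apply (Dx_ext U (fun a b => - uy a b / 2)); auto. intros a b Hab; rewrite uz_form; auto.
    unfold Dx in *; eapply dpl_eq; [dtac|cbv beta; field]. }
  assert (dz4 : Dy (fun a b => cim (uz a b)) x y (- uyy / 2)).
  { apply (Dy_ext U (fun a b => - uy a b / 2)); auto. intros a b Hab; rewrite uz_form; auto.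
    unfold Dy in *; eapply dpl_eq; [dtac|cbv beta; field]. }
  unfold Dx, Dy in *.
  intros k j Hk Hj. revert k Hk. apply lt5; revert j Hj; apply lt5.
  all: unfold Afield, Amat; cbn [cre cim Cscal Cadd Csub Copp Cmul RtoC Ci C0].
  all: eexists (_, _, _, _); repeat split; dtac.
Qed.

Lemma concl t x y : U x y ->
    (is_so41 (alpha_x (Afield t c u h uz xi x y)) /\
     is_so41 (alpha_y (Afield t c u h uz xi x y))) /\
    (t = 0 -> forall i j, (i < 5)%nat -> (j < 5)%nat ->
       exists w, HasDz (fun a b => RtoC (Fmat f F1 F2 N1 N2 a b i j)) x y w /\
         w = Csum5 (fun k => Cmul (RtoC (Fmat f F1 F2 N1 N2 x y i k))
                                  (Afield 0 c u h uz xi x y k j))) /\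
    (forall i j, (i < 5)%nat -> (j < 5)%nat ->
       exists w1 w2,
         HasDz (fun a b => Cconj (Afield t c u h uz xi a b i j)) x y w1 /\
         HasDzb (fun a b => Afield t c u h uz xi a b i j) x y w2 /\
         Cadd (Csub w1 w2) (commAAbar (Afield t c u h uz xi x y) i j) = C0).
Proof.
  intros Hp.
  assert (SE : forall a b, U a b -> forall i j, (i < 5)%nat -> (j < 5)%nat ->
    Dx (fun a b => Fmat f F1 F2 N1 N2 a b i j) a b
       (sum5 (fun k => Fmat f F1 F2 N1 N2 a b i k * alpha_x (Afield 0 c u h uz xi a b) k j)) /\
    Dy (fun a b => Fmat f F1 F2 N1 N2 a b i j) a b
       (sum5 (fun k => Fmat f F1 F2 N1 N2 a b i k * alpha_y (Afield 0 c u h uz xi a b) k j)))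
    by (intros; eapply struct_eq; eauto).
  split; [split; [exact (so41_x t c (u x y) (h x y) (uz x y) (xi x y))|exact (so41_y t c (u x y) (h x y) (uz x y) (xi x y))]|].
  split.
  { intros Ht i j Hi Hj. subst t. destruct (SE x y Hp i j Hi Hj) as [D1 D2].
    eexists. split.
    - exists (sum5 (fun k => Fmat f F1 F2 N1 N2 x y i k * alpha_x (Afield 0 c u h uz xi x y) k j)),
             (sum5 (fun k => Fmat f F1 F2 N1 N2 x y i k * alpha_y (Afield 0 c u h uz xi x y) k j)), 0, 0.
      repeat split; auto; unfold Dx, Dy; simpl; apply dpl_const.
    - unfold Csum5, sum5, alpha_x, alpha_y, Cadd, Cmul, RtoC, Cscal. simpl. f_equal; field. }
  destruct (vec25 (0, 0, 0, 0) _ (A0_deriv x y Hp)) as [Dv HDv].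
  pose (Rx0 := fun k j => match Dv k j with (a, _, _, _) => a end).
  pose (Ry0 := fun k j => match Dv k j with (_, a, _, _) => a end).
  pose (Ix0 := fun k j => match Dv k j with (_, _, a, _) => a end).
  pose (Iy0 := fun k j => match Dv k j with (_, _, _, a) => a end).
  assert (HD : forall k j, (k < 5)%nat -> (j < 5)%nat ->
    Dx (fun a b => cre (Afield 0 c u h uz xi a b k j)) x y (Rx0 k j) /\
    Dy (fun a b => cre (Afield 0 c u h uz xi a b k j)) x y (Ry0 k j) /\
    Dx (fun a b => cim (Afield 0 c u h uz xi a b k j)) x y (Ix0 k j) /\
    Dy (fun a b => cim (Afield 0 c u h uz xi a b k j)) x y (Iy0 k j)).
  { intros k j Hk Hj. specialize (HDv k j Hk Hj). unfold Rx0, Ry0, Ix0, Iy0.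
    destruct (Dv k j) as [[[? ?] ?] ?]. exact HDv. }
  clearbody Rx0 Ry0 Ix0 Iy0. clear HDv Dv.
  assert (OM : forall i j, (i < 5)%nat -> (j < 5)%nat ->
     Om (fun a b => alpha_x (Afield 0 c u h uz xi a b)) (fun a b => alpha_y (Afield 0 c u h uz xi a b)) x y
        (fun k j => 2 * Ry0 k j) (fun k j => - (2 * Ix0 k j)) i j = 0).
  { apply (gmc U (Fmat f F1 F2 N1 N2)); auto.
    - intros k j Hk Hj. destruct (HD k j Hk Hj) as [_ [h2 [h3 _]]]. unfold Dx, Dy, alpha_x, alpha_y in *.
      split; (eapply dpl_eq; [dtac|cbv beta; ring]).
    - intros; eapply MS_F; eauto.
    - intros; apply HSO; auto. }
  destruct (HuS x y Hp) as [du1 [du2 _]].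
  intros i j Hi Hj.
  destruct (HD i j Hi Hj) as [d1 [d2 [d3 d4]]].
  pose proof (OM i j Hi Hj) as Oij. clear OM.
  set (kk := t / (2 * c)).
  assert (e1 : Dx (fun a b => cre (Afield t c u h uz xi a b i j)) x y (Rx0 i j + kk * (exp (u x y) * ux x y / sqrt 2) * Mre i j)).
  { unfold Dx in *. apply (dpl_ext (fun s => cre (Afield 0 c u h uz xi s y i j) + kk * (exp (u s y) / sqrt 2) * Mre i j)).
    - intros s; symmetry; apply (Adecomp t c (u s y) (h s y) (uz s y) (xi s y) i j Hi Hj).
    - eapply dpl_eq; [eapply dpl_plus; [exact d1|dtac]|unfold kk; cbv beta; unfold Rdiv; ring]. }
  assert (e2 : Dy (fun a b => cre (Afield t c u h uz xi a b i j)) x y (Ry0 i j + kk * (exp (u x y) * uy x y / sqrt 2) * Mre i j)).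
  { unfold Dy in *. apply (dpl_ext (fun s => cre (Afield 0 c u h uz xi x s i j) + kk * (exp (u x s) / sqrt 2) * Mre i j)).
    - intros s; symmetry; apply (Adecomp t c (u x s) (h x s) (uz x s) (xi x s) i j Hi Hj).
    - eapply dpl_eq; [eapply dpl_plus; [exact d2|dtac]|unfold kk; cbv beta; unfold Rdiv; ring]. }
  assert (e3 : Dx (fun a b => cim (Afield t c u h uz xi a b i j)) x y (Ix0 i j + kk * (exp (u x y) * ux x y / sqrt 2) * Mim i j)).
  { unfold Dx in *. apply (dpl_ext (fun s => cim (Afield 0 c u h uz xi s y i j) + kk * (exp (u s y) / sqrt 2) * Mim i j)).
    - intros s; symmetry; apply (Adecomp t c (u s y) (h s y) (uz s y) (xi s y) i j Hi Hj).
    - eapply dpl_eq; [eapply dpl_plus; [exact d3|dtac]|unfold kk; cbv beta; unfold Rdiv; ring]. }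
  assert (e4 : Dy (fun a b => cim (Afield t c u h uz xi a b i j)) x y (Iy0 i j + kk * (exp (u x y) * uy x y / sqrt 2) * Mim i j)).
  { unfold Dy in *. apply (dpl_ext (fun s => cim (Afield 0 c u h uz xi x s i j) + kk * (exp (u x s) / sqrt 2) * Mim i j)).
    - intros s; symmetry; apply (Adecomp t c (u x s) (h x s) (uz x s) (xi x s) i j Hi Hj).
    - eapply dpl_eq; [eapply dpl_plus; [exact d4|dtac]|unfold kk; cbv beta; unfold Rdiv; ring]. }
  set (Rx := Rx0 i j + kk * (exp (u x y) * ux x y / sqrt 2) * Mre i j) in *.
  set (Ry := Ry0 i j + kk * (exp (u x y) * uy x y / sqrt 2) * Mre i j) in *.
  set (Ix := Ix0 i j + kk * (exp (u x y) * ux x y / sqrt 2) * Mim i j) in *.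
  set (Iy := Iy0 i j + kk * (exp (u x y) * uy x y / sqrt 2) * Mim i j) in *.
  exists (mkC ((Rx + - Iy) / 2) ((- Ix - Ry) / 2)), (mkC ((Rx - Iy) / 2) ((Ix + Ry) / 2)).
  split; [|split].
  - exists Rx, Ry, (- Ix), (- Iy). repeat split; auto; unfold Dx, Dy in *; simpl; apply dpl_opp; auto.
  - exists Rx, Ry, Ix, Iy. repeat split; auto.
  - unfold Rx, Ry, Ix, Iy, kk; clear Rx Ry Ix Iy kk e1 e2 e3 e4 d1 d2 d3 d4 HD.
    pose proof (uz_form x y Hp) as UZ.
    clear - Oij UZ Hi Hj.
    unfold Om, sum5 in Oij. unfold commAAbar, Csum5.
    destruct i as [|[|[|[|[|i]]]]]; [| | | | |lia];
    destruct j as [|[|[|[|[|j]]]]]; try lia.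
    all: unfold alpha_x, alpha_y, Afield, Amat, Mre, Mim, C0 in *.
    all: try rewrite UZ in Oij; try rewrite UZ.
    all: cbv beta iota zeta delta [cre cim Cscal Cadd Csub Copp Cmul RtoC Ci Cconj] in *.
    all: f_equal; unfold Rdiv in *; lra.
Qed.
End WithU2.

Lemma concl_fin t x y : U x y ->
    (is_so41 (alpha_x (Afield t c u h uz xi x y)) /\
     is_so41 (alpha_y (Afield t c u h uz xi x y))) /\
    (t = 0 -> forall i j, (i < 5)%nat -> (j < 5)%nat ->
       exists w, HasDz (fun a b => RtoC (Fmat f F1 F2 N1 N2 a b i j)) x y w /\
         w = Csum5 (fun k => Cmul (RtoC (Fmat f F1 F2 N1 N2 x y i k))
                                  (Afield 0 c u h uz xi x y k j))) /\
    (forall i j, (i < 5)%nat -> (j < 5)%nat ->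
       exists w1 w2,
         HasDz (fun a b => Cconj (Afield t c u h uz xi a b i j)) x y w1 /\
         HasDzb (fun a b => Afield t c u h uz xi a b i j) x y w2 /\
         Cadd (Csub w1 w2) (commAAbar (Afield t c u h uz xi x y) i j) = C0).
Proof.
  destruct u_data as [ux [uy [uxy [S [C1 C2]]]]]. apply (concl ux uy uxy S C1 C2).
Qed.
End Fin.


Theorem mainTheorem16
  (U : R -> R -> Prop)
  (f F1 F2 N1 N2 : R -> R -> VR) (u h : R -> R -> R) (xi : R -> R -> Cx) (c : R)
  (fz : R -> R -> VC) (uz : R -> R -> Cx) :
  openU U ->
  (* regularity *)
  (forall i, (i < 5)%nat ->
     smooth U (fun x y => f x y i) /\ smooth U (fun x y => N1 x y i) /\
     smooth U (fun x y => N2 x y i)) ->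
  smooth U u -> smooth U h ->
  smooth U (fun x y => cre (xi x y)) -> smooth U (fun x y => cim (xi x y)) ->
  (* f takes values in S^4_1 *)
  (forall x y, U x y -> inner5 (f x y) (f x y) = 1) ->
  (* fz = f_z *)
  (forall x y, U x y -> HasDzV f x y (fz x y)) ->
  (* conformal spacelike, <f_z, f_zbar> = e^{2u} *)
  (forall x y, U x y ->
     cinner (fz x y) (fz x y) = C0 /\
     cinner (fz x y) (Vconj (fz x y)) = RtoC (exp (2 * u x y))) ->
  (* f_z = e^u/sqrt2 (F1 - i F2) *)
  (forall x y, U x y -> forall i, (i < 5)%nat ->
     fz x y i = Cscal (exp (u x y) / sqrt 2) (mkC (F1 x y i) (- F2 x y i))) ->
  (* orthonormal normal frame, N2 future pointing *)
  (forall x y, U x y ->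
     inner5 (N1 x y) (N1 x y) = 1 /\ inner5 (N2 x y) (N2 x y) = -1 /\
     inner5 (N1 x y) (N2 x y) = 0 /\
     inner5 (N1 x y) (f x y) = 0 /\ inner5 (N2 x y) (f x y) = 0 /\
     inner5 (N1 x y) (F1 x y) = 0 /\ inner5 (N1 x y) (F2 x y) = 0 /\
     inner5 (N2 x y) (F1 x y) = 0 /\ inner5 (N2 x y) (F2 x y) = 0 /\
     - N2 x y 4%nat < 0) ->
  (* F = (f, F1, F2, N1, N2) in SO_+(4,1) (positive orientation) *)
  (forall x y, U x y -> SOp41 (Fmat f F1 F2 N1 N2 x y)) ->
  (* parallel normal frame: <d_z N1, N2> = 0 *)
  (forall x y, U x y -> forall w, HasDzV N1 x y w -> cinner w (VtoC (N2 x y)) = C0) ->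
  (* xi_1 = <f_zz, N1> = xi + c,  xi_2 = - <f_zz, N2> = xi,  c real nonzero *)
  c <> 0 ->
  (forall x y, U x y -> forall w, HasDzCV fz x y w ->
     cinner w (VtoC (N1 x y)) = Cadd (xi x y) (RtoC c) /\
     Copp (cinner w (VtoC (N2 x y))) = xi x y) ->
  (* f_{z zbar} = -e^{2u} f + e^{2u} H with H = h (N1 + N2) (marginally trapped) *)
  (forall x y, U x y -> forall w, HasDzbCV fz x y w -> forall i, (i < 5)%nat ->
     w i = RtoC (exp (2 * u x y) * (- f x y i + h x y * (N1 x y i + N2 x y i)))) ->
  (* non-isotropic: xi_1^2 - xi_2^2 <> 0 *)
  (forall x y, U x y ->
     Csub (Cmul (Cadd (xi x y) (RtoC c)) (Cadd (xi x y) (RtoC c)))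
          (Cmul (xi x y) (xi x y)) <> C0) ->
  (* uz = u_z *)
  (forall x y, U x y -> HasDz (fun a b => RtoC (u a b)) x y (uz x y)) ->
  forall t : R, forall x y, U x y ->
    (* alpha_t is so(4,1)-valued *)
    (is_so41 (alpha_x (Afield t c u h uz xi x y)) /\
     is_so41 (alpha_y (Afield t c u h uz xi x y))) /\
    (* for t = 0: A^0 = F^{-1} F_z, i.e. F A^0 = F_z *)
    (t = 0 -> forall i j, (i < 5)%nat -> (j < 5)%nat ->
       exists w, HasDz (fun a b => RtoC (Fmat f F1 F2 N1 N2 a b i j)) x y w /\
         w = Csum5 (fun k => Cmul (RtoC (Fmat f F1 F2 N1 N2 x y i k))
                                  (Afield 0 c u h uz xi x y k j))) /\
    (* Maurer-Cartan: d_z conj(A) - d_zbar A + [A, conj A] = 0 *)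
    (forall i j, (i < 5)%nat -> (j < 5)%nat ->
       exists w1 w2,
         HasDz (fun a b => Cconj (Afield t c u h uz xi a b i j)) x y w1 /\
         HasDzb (fun a b => Afield t c u h uz xi a b i j) x y w2 /\
         Cadd (Csub w1 w2) (commAAbar (Afield t c u h uz xi x y) i j) = C0).
Proof.
  intros HU Hreg Hu Hh Hxr Hxim Hsph Hfz Hconf HF12 Hnorm HSO Hpar Hc Hxi Hzzb Hniso Huz t x y Hp.
  eapply concl_fin; eauto.
Qed.
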